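(* Let $Z=(X,Y)\in\Omega_m$ with $m$ odd, and suppose $\mathcal P(Z)$ has no singular points in $S^1$. Then $S^1$ is a closed poly-trajectory of type 1 of $\mathcal P(Z)$, and the derivative at $p_0\in S^1\cap D$ of the Poincaré (first return) map of $S^1$ on a transversal section at $p_0$ is $$\Pi'(p_0)=e^{\sigma\mu},\qquad \mu=\int_0^{\pi}\left(\frac{R_{1,m}(\theta)}{A_{1,m}(\theta)}+\frac{R_{2,m}(\theta)}{A_{2,m}(\theta)}\right)d\theta,$$ where $\sigma=-1$ if $S^1$ is oriented counterclockwise and $\sigma=1$ otherwise. Moreover $S^1$ is an attractor if $\sigma\mu<0$ and a repeller if $\sigma\mu>0$; in particular $S^1$ is an elementary closed poly-trajectory if and only if $\mu\neq0$.
   Context: $\chi_m$ is the space of real polynomial vector fields $X=P\partial_x+Q\partial_y$ on $\mathbb R^2$ with $\deg P,\deg Q\le m$; $\deg X=\max\{\deg P,\deg Q\}$. $\Omega_m$ is the set of pairs $Z=(X,Y)$, $X,Y\in\chi_m$ of degree exactly $m$, regarded as the discontinuous vector field equal to $X$ on $\{y\ge0\}$ and $Y$ on $\{y\le0\}$. For $X\in\chi_m$, $\mathcal P(X)$ is the unique analytic vector field tangent to $S^2=\{x^2+y^2+z^2=1\}$ whose restriction to $S^2_+=\{z>0\}$ is $z^{m-1}\wp^*(X)$, $\wp(u,v)=(u,v,1)/\sqrt{u^2+v^2+1}$; $S^1=\{z=0\}$ is invariant. $\mathcal P(Z)=(\mathcal P(X),\mathcal P(Y))$ is the discontinuous field on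 the sphere equal to $\mathcal P(X)$ where $y\ge0$, $\mathcal P(Y)$ where $y\le0$, with $f(x,y,z)=y$ and $D=\{y=0\}$; $S^1\cap D=\{(\pm1,0,0)\}$. Write $X=(P_1,Q_1)$, $Y=(P_2,Q_2)$ and let $P_{k,m},Q_{k,m}$ be the homogeneous parts of degree $m$ of $P_k,Q_k$. Define $A_{k,m}(\theta)=Q_{k,m}(\cos\theta,\sin\theta)\cos\theta-P_{k,m}(\cos\theta,\sin\theta)\sin\theta$ and $R_{k,m}(\theta)=P_{k,m}(\cos\theta,\sin\theta)\cos\theta+Q_{k,m}(\cos\theta,\sin\theta)\sin\theta$, $k=1,2$. The Poincaré map is computed in coordinates $(\theta,\rho)$ given by $(\theta,\rho)\mapsto(1+\rho^2)^{-1/2}(\cos\theta,\sin\theta,\rho)$ (so $\rho=0$ is $S^1$), on the transversal section $\{\theta=0,\ 0\le\rho\le\delta_0\}$, parametrized by $\rho$. A closed poly-trajectory is of type 1 if it meets $D$ only at points where $(\mathcal P(X)f)(\mathcal P(Y)f)>0$ (sewing points); a closed poly-trajectory of type 1 is elementary if the derivative of its first return map is $\neq1$. *)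

(* Defs.v *)
From Stdlib Require Import Reals Lra.
Open Scope R_scope.

(** * Polynomial vector fields of degree <= m on R^2.
    A polynomial p(x,y) is given by its coefficient function c, with
    c i j the coefficient of x^i y^j; only monomials of total degree <= m
    are ever used, so any c represents an element of R[x,y]_{<= m}. *)
Record pvf := mkPvf { cP : nat -> nat -> R ; cQ : nat -> nat -> R }.

Definition hom (c : nat -> nat -> R) (k : nat) (x y : R) : R :=
  sum_f_R0 (fun i => c i (k - i)%nat * x ^ i * y ^ (k - i)) k.

Definition peval (m : nat) (c : nat -> nat -> R) (x y : R) : R :=
  sum_f_R0 (fun k => hom c k x y) m.

Definition deg_exact (m : nat) (X : pvf) : Prop :=
  exists i : nat, (i <= m)%nat /\ (cP X i (m - i) <> 0 \/ cQ X i (m - i) <> 0).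

Definition in_Omega (m : nat) (X Y : pvf) : Prop := deg_exact m X /\ deg_exact m Y.

(** A_j and R_j built from the homogeneous parts of degree j;
    A_m, R_m are the paper's A_{k,m}, R_{k,m}. *)
Definition Afun (X : pvf) (j : nat) (th : R) : R :=
  hom (cQ X) j (cos th) (sin th) * cos th - hom (cP X) j (cos th) (sin th) * sin th.
Definition Rfun (X : pvf) (j : nat) (th : R) : R :=
  hom (cP X) j (cos th) (sin th) * cos th + hom (cQ X) j (cos th) (sin th) * sin th.

(** * The Poincare compactification P(X) written in the coordinates (theta, rho),
    (theta,rho) |-> (1+rho^2)^{-1/2} (cos theta, sin theta, rho).
    For rho > 0 this is z^{m-1} wp^*(X) expressed in these coordinates
    (the plane point is (u,v) = (cos theta, sin theta)/rho and
    z = rho/sqrt(1+rho^2)); the formula is analytic in (theta,rho) and is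
    therefore the (unique analytic) field P(X) on the whole chart. *)
Definition PX (m : nat) (X : pvf) (th rho : R) : R * R :=
  ( sum_f_R0 (fun j => rho ^ (m - j) * Afun X j th) m / (sqrt (1 + rho ^ 2)) ^ (m - 1),
    - sum_f_R0 (fun j => rho ^ (m + 1 - j) * Rfun X j th) m / (sqrt (1 + rho ^ 2)) ^ (m - 1) ).

(** Lie derivative of f(x,y,z) = y along a field F given in the chart:
    on the chart, f = sin theta / sqrt(1+rho^2). *)
Definition Lf (F : R -> R -> R * R) (th rho : R) : R :=
  fst (F th rho) * cos th / sqrt (1 + rho ^ 2)
  - snd (F th rho) * rho * sin th / (sqrt (1 + rho ^ 2)) ^ 3.

Definition sliding (F G : R -> R -> R * R) (th rho : R) : R * R :=
  ( (Lf G th rho * fst (F th rho) - Lf F th rho * fst (G th rho)) / (Lf G th rho - Lf F th rho),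
    (Lf G th rho * snd (F th rho) - Lf F th rho * snd (G th rho)) / (Lf G th rho - Lf F th rho) ).

(** singular points of the discontinuous field P(Z) (X on y >= 0, i.e.
    sin theta >= 0; Y on y <= 0): equilibria of P(X) in y >= 0, of P(Y) in
    y <= 0, and on D: tangency points and pseudo-equilibria (zeros of the
    sliding field in the sliding/escaping region). *)
Definition singular_point (m : nat) (X Y : pvf) (th rho : R) : Prop :=
  let F := PX m X in let G := PX m Y in
  (sin th >= 0 /\ F th rho = (0, 0)) \/
  (sin th <= 0 /\ G th rho = (0, 0)) \/
  (sin th = 0 /\ (Lf F th rho = 0 \/ Lf G th rho = 0 \/
                  (Lf F th rho * Lf G th rho < 0 /\ sliding F G th rho = (0, 0)))).

Definition no_singular_on_S1 (m : nat) (X Y : pvf) : Prop :=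
  forall th : R, ~ singular_point m X Y th 0.

(** p = point of S^1 cap D with angle th (th = 0 : (1,0,0), th = PI : (-1,0,0))
    is a sewing point *)
Definition sewing (m : nat) (X Y : pvf) (th : R) : Prop :=
  Lf (PX m X) th 0 * Lf (PX m Y) th 0 > 0.

Definition is_sol (F : R -> R -> R * R) (th rh : R -> R) (T : R) : Prop :=
  forall t, 0 <= t <= T ->
    derivable_pt_lim th t (fst (F (th t) (rh t))) /\
    derivable_pt_lim rh t (snd (F (th t) (rh t))).

(** an arc of orbit of F from (a, r0) to (b, r1), with theta strictly between
    a and b in between (so it stays in the open half-sphere between them) *)
Definition arc (F : R -> R -> R * R) (a b r0 r1 : R) : Prop :=
  exists (T : R) (th rh : R -> R),
    0 < T /\ is_sol F th rh T /\
    th 0 = a /\ rh 0 = r0 /\ th T = b /\ rh T = r1 /\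
    (forall t, 0 < t < T -> Rmin a b < th t < Rmax a b).

(** S^1 oriented counterclockwise (theta increasing along S^1) *)
Definition ccw (m : nat) (X : pvf) : Prop := Afun X m 0 > 0.

Definition orient_sign (m : nat) (X : pvf) : R :=
  if Rlt_dec 0 (Afun X m 0) then -1 else 1.

(** first return relation of P(Z) on the section {theta = 0, rho >= 0}:
    the poly-trajectory starting at (0, r0) returns to the section at (0, r1)
    (theta = 2 pi or -2 pi in the covering), crossing D at theta = +-pi. *)
Definition return_rel (m : nat) (X Y : pvf) (r0 r1 : R) : Prop :=
  if Rlt_dec 0 (Afun X m 0) then
    exists rmid, arc (PX m X) 0 PI r0 rmid /\ arc (PX m Y) PI (2 * PI) rmid r1
  else
    exists rmid, arc (PX m Y) 0 (- PI) r0 rmid /\ arc (PX m X) (- PI) (- 2 * PI) rmid r1.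

Definition is_poincare_map (m : nat) (X Y : pvf) (delta : R) (Pi : R -> R) : Prop :=
  0 < delta /\
  (forall r0, 0 <= r0 < delta -> return_rel m X Y r0 (Pi r0)) /\
  (forall r0 r1, 0 <= r0 < delta -> return_rel m X Y r0 r1 -> r1 = Pi r0).

(** right derivative (section parametrized by rho >= 0) *)
Definition rderiv_at (f : R -> R) (x l : R) : Prop :=
  forall eps, eps > 0 -> exists eta, eta > 0 /\
    forall h, 0 < h < eta -> Rabs ((f (x + h) - f x) / h - l) < eps.

Definition closed_polytraj_type1 (m : nat) (X Y : pvf) : Prop :=
  return_rel m X Y 0 0 /\ sewing m X Y 0 /\ sewing m X Y PI.

Definition elementary (m : nat) (X Y : pvf) : Prop :=
  exists delta Pi d, is_poincare_map m X Y delta Pi /\ rderiv_at Pi 0 d /\ d <> 1.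

Definition attractor (m : nat) (X Y : pvf) : Prop :=
  exists delta, delta > 0 /\ forall r0, 0 < r0 < delta ->
    exists u : nat -> R, u 0%nat = r0 /\
      (forall n, return_rel m X Y (u n) (u (S n))) /\ Un_cv u 0.
Definition repeller (m : nat) (X Y : pvf) : Prop :=
  exists delta, delta > 0 /\ forall r0, 0 < r0 < delta ->
    exists u : nat -> R, u 0%nat = r0 /\
      (forall n, return_rel m X Y (u (S n)) (u n)) /\ Un_cv u 0.

(* Main.v *)
Require Import Defs.
From Stdlib Require Import Reals Lra Psatz Factorial ZArith Classical IndefiniteDescription FunctionalExtensionality.
From Coquelicot Require Import Coquelicot.
Open Scope R_scope.


Lemma cont_eps (f : R -> R) (x : R) :
  (forall eps, eps > 0 -> exists del, del > 0 /\ forall y, Rabs (y - x) < del -> Rabs (f y - f x) < eps) ->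
  continuity_pt f x.
Proof.
  intros H eps Heps. destruct (H eps Heps) as [d [Hd H']].
  exists d; split; [lra|]. intros y [_ Hy]. apply H'. exact Hy.
Qed.

Lemma cont_eps_inv (f : R -> R) (x : R) : continuity_pt f x ->
  forall eps, eps > 0 -> exists del, del > 0 /\ forall y, Rabs (y - x) < del -> Rabs (f y - f x) < eps.
Proof.
  intros H eps Heps. destruct (H eps Heps) as [d [Hd H']].
  exists d; split; [lra|]. intros y Hy.
  destruct (Req_dec y x) as [->|Hne]. unfold Rminus; rewrite Rplus_opp_r, Rabs_R0; lra.
  apply H'. split; [split; [exact I| auto] | exact Hy].
Qed.

Lemma dlim_cont f x l : derivable_pt_lim f x l -> continuity_pt f x.
Proof. intros H. apply derivable_continuous_pt. exists l. exact H. Qed.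

Lemma lip_sin a b : Rabs (sin a - sin b) <= Rabs (a - b).
Proof.
  destruct (Req_dec a b) as [->|Hne]. unfold Rminus; rewrite !Rplus_opp_r, Rabs_R0; lra.
  assert (Hg : forall x y, x < y -> Rabs (sin y - sin x) <= Rabs (y - x)).
  { intros x y Hxy. destruct (MVT_cor2 sin cos x y Hxy) as [c [Hc _]].
    intros; apply derivable_pt_lim_sin.
    rewrite Hc, Rabs_mult. pose proof (COS_bound c).
    assert (Rabs (cos c) <= 1) by (apply Rabs_le; lra).
    pose proof (Rabs_pos (y - x)). nra. }
  destruct (Rlt_or_le a b).
  rewrite <- (Rabs_Ropp (sin a - sin b)), <- (Rabs_Ropp (a - b)).
  replace (-(sin a - sin b)) with (sin b - sin a) by ring.
  replace (-(a - b)) with (b - a) by ring. auto.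
  apply Hg; lra.
Qed.

Lemma lip_cos a b : Rabs (cos a - cos b) <= Rabs (a - b).
Proof.
  rewrite !cos_sin. replace (a - b) with ((PI/2 + a) - (PI/2 + b)) by ring. apply lip_sin.
Qed.

Definition LB (f : R -> R -> R) := exists M L, 0 <= M /\ 0 <= L /\
  forall a b a' b', Rabs (f a b) <= M /\ Rabs (f a b - f a' b') <= L * (Rabs (a - a') + Rabs (b - b')).

Lemma LB_const c : LB (fun _ _ => c).
Proof.
  exists (Rabs c), 0. split; [apply Rabs_pos|split; [lra|]]. intros; split; [lra|].
  unfold Rminus; rewrite Rplus_opp_r, Rabs_R0. lra.
Qed.

Lemma LB_plus f g : LB f -> LB g -> LB (fun a b => f a b + g a b).
Proof.
  intros [M1 [L1 [HM1 [HL1 H1]]]] [M2 [L2 [HM2 [HL2 H2]]]].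
  exists (M1 + M2), (L1 + L2). split; [lra|split;[lra|]]. intros a b a' b'.
  destruct (H1 a b a' b') as [A1 B1]. destruct (H2 a b a' b') as [A2 B2].
  pose proof (Rabs_pos (a-a')); pose proof (Rabs_pos (b - b')).
  split. eapply Rle_trans. apply Rabs_triang. lra.
  replace (f a b + g a b - (f a' b' + g a' b')) with ((f a b - f a' b') + (g a b - g a' b')) by ring.
  eapply Rle_trans. apply Rabs_triang. nra.
Qed.

Lemma LB_opp f : LB f -> LB (fun a b => - f a b).
Proof.
  intros [M1 [L1 [HM1 [HL1 H1]]]]. exists M1, L1. split; [lra|split;[lra|]]. intros a b a' b'.
  destruct (H1 a b a' b') as [A1 B1]. rewrite Rabs_Ropp. split; auto.
  replace (- f a b - - f a' b') with (-(f a b - f a' b')) by ring. rewrite Rabs_Ropp; auto.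
Qed.

Lemma LB_mult f g : LB f -> LB g -> LB (fun a b => f a b * g a b).
Proof.
  intros [M1 [L1 [HM1 [HL1 H1]]]] [M2 [L2 [HM2 [HL2 H2]]]].
  exists (M1 * M2), (M1 * L2 + M2 * L1). split; [nra|split;[nra|]]. intros a b a' b'.
  destruct (H1 a b a' b') as [A1 B1]. destruct (H2 a b a' b') as [A2 B2].
  destruct (H1 a' b' a' b') as [A1' _].
  pose proof (Rabs_pos (a-a')); pose proof (Rabs_pos (b - b')).
  pose proof (Rabs_pos (f a b)); pose proof (Rabs_pos (g a b)).
  pose proof (Rabs_pos (f a' b')).
  split. rewrite Rabs_mult. nra.
  replace (f a b * g a b - f a' b' * g a' b') with (f a' b' * (g a b - g a' b') + g a b * (f a b - f a' b')) by ring.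
  eapply Rle_trans. apply Rabs_triang. rewrite !Rabs_mult.
  pose proof (Rabs_pos (g a b - g a' b')). pose proof (Rabs_pos (f a b - f a' b')).
  set (D := Rabs (a - a') + Rabs (b - b')) in *.
  assert (Rabs (f a' b') * Rabs (g a b - g a' b') <= M1 * (L2 * D)) by (apply Rmult_le_compat; auto).
  assert (Rabs (g a b) * Rabs (f a b - f a' b') <= M2 * (L1 * D)) by (apply Rmult_le_compat; auto).
  nra.
Qed.

Lemma LB_pow f n : LB f -> LB (fun a b => f a b ^ n).
Proof.
  intros Hf. induction n as [|n IH]; simpl.
  apply LB_const. apply LB_mult; auto.
Qed.

Lemma LB_sum (f : nat -> R -> R -> R) n : (forall i, (i <= n)%nat -> LB (f i)) ->
  LB (fun a b => sum_f_R0 (fun i => f i a b) n).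
Proof.
  induction n as [|n IH]; intros H; simpl. apply H; lia.
  apply LB_plus. apply IH. intros; apply H; lia. apply H; lia.
Qed.

Lemma LB_cos : LB (fun a _ => cos a).
Proof.
  exists 1, 1. split;[lra|split;[lra|]]. intros. split. pose proof (COS_bound a). apply Rabs_le; lra.
  pose proof (lip_cos a a'). pose proof (Rabs_pos (b - b')). lra.
Qed.

Lemma LB_sin : LB (fun a _ => sin a).
Proof.
  exists 1, 1. split;[lra|split;[lra|]]. intros. split. pose proof (SIN_bound a). apply Rabs_le; lra.
  pose proof (lip_sin a a'). pose proof (Rabs_pos (b - b')). lra.
Qed.

Definition clamp (lo hi x : R) := Rmax lo (Rmin hi x).

Lemma clamp_lip lo hi x y : Rabs (clamp lo hi x - clamp lo hi y) <= Rabs (x - y).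
Proof.
  unfold clamp, Rmax, Rmin. repeat destruct Rle_dec; apply Rabs_le; split;
  match goal with |- _ => idtac end;
  try (pose proof (Rle_abs (x - y)); pose proof (Rle_abs (-(x-y))); rewrite Rabs_Ropp in *; lra).
Qed.

Lemma clamp_in lo hi x : lo <= hi -> lo <= clamp lo hi x <= hi.
Proof. unfold clamp, Rmax, Rmin; repeat destruct Rle_dec; lra. Qed.

Lemma clamp_id lo hi x : lo <= x <= hi -> clamp lo hi x = x.
Proof. unfold clamp, Rmax, Rmin; repeat destruct Rle_dec; lra. Qed.

Lemma clamp_abs d x : 0 <= d -> Rabs (clamp (-d) d x) <= Rabs x.
Proof. intros. unfold clamp, Rmax, Rmin; repeat destruct Rle_dec; apply Rabs_le;
  pose proof (Rle_abs x); pose proof (Rle_abs (-x)); rewrite Rabs_Ropp in *; lra. Qed.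

Lemma LB_clampb d : 0 <= d -> LB (fun _ b => clamp (-d) d b).
Proof.
  intros Hd. exists d, 1. split; [lra|split;[lra|]]. intros. split.
  pose proof (clamp_in (-d) d b). apply Rabs_le; lra.
  pose proof (clamp_lip (-d) d b b'). pose proof (Rabs_pos (a - a')). lra.
Qed.

Lemma LB_compa f lo hi : LB f -> LB (fun a b => f (clamp lo hi a) b).
Proof.
  intros [M [L [HM [HL H]]]]. exists M, L. split;[lra|split;[lra|]]. intros a b a' b'.
  destruct (H (clamp lo hi a) b (clamp lo hi a') b') as [A B]. split; auto.
  eapply Rle_trans. apply B. apply Rmult_le_compat_l; auto. pose proof (clamp_lip lo hi a a'). lra.
Qed.

Lemma invsq_lip x y : Rabs (/ sqrt (1 + x^2) - / sqrt (1 + y^2)) <= Rabs (x - y).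
Proof.
  assert (Hx : 0 <= 1 + x^2) by nra. assert (Hy : 0 <= 1 + y^2) by nra.
  pose proof (sqrt_sqrt _ Hx) as Sx. pose proof (sqrt_sqrt _ Hy) as Sy.
  pose proof (sqrt_pos (1+x^2)). pose proof (sqrt_pos (1+y^2)).
  set (p := sqrt (1 + x^2)) in *. set (q := sqrt (1+y^2)) in *. clearbody p q.
  assert (p >= 1) by nra. assert (q >= 1) by nra.
  assert (Rabs x <= p). { apply Rsqr_incr_0_var. unfold Rsqr. rewrite <- Rabs_mult, Rabs_right by nra. nra. lra. }
  assert (Rabs y <= q). { apply Rsqr_incr_0_var. unfold Rsqr. rewrite <- Rabs_mult, Rabs_right by nra. nra. lra. }
  replace (/ p - / q) with ((q - p) / (p * q)) by (field; lra).
  replace (q - p) with ((y - x) * (y + x) / (p + q)).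
 2:{ apply (Rmult_eq_reg_r (p+q)); [|lra]. unfold Rdiv. rewrite Rmult_assoc, Rinv_l by lra. nra. }
  unfold Rdiv. rewrite !Rabs_mult, !Rabs_inv. rewrite (Rabs_right (p+q)) by lra.
  rewrite (Rabs_right (p*q)) by nra. rewrite <- (Rabs_Ropp (y - x)). replace (-(y-x)) with (x - y) by ring.
  assert (Rabs (y + x) <= p + q) by (eapply Rle_trans; [apply Rabs_triang| lra]).
  assert (Rabs (y + x) * / (p + q) <= 1).
  { apply (Rmult_le_reg_r (p+q)). lra. rewrite Rmult_assoc, Rinv_l by lra. lra. }
  assert (/ (p * q) <= 1). { rewrite <- Rinv_1. apply Rinv_le_contravar; nra. }
  pose proof (Rabs_pos (x - y)). pose proof (Rabs_pos (y + x)).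
  assert (0 <= / (p+q)) by (apply Rlt_le, Rinv_0_lt_compat; lra).
  assert (0 <= / (p*q)) by (apply Rlt_le, Rinv_0_lt_compat; nra).
  assert (Rabs (x - y) * (Rabs (y + x) * / (p + q)) <= Rabs (x - y)) by nra.
  nra.
Qed.

Lemma invsq_bound x : 0 < / sqrt (1 + x^2) <= 1.
Proof.
  assert (Hx : 0 <= 1 + x^2) by nra. pose proof (sqrt_sqrt _ Hx) as Sx.
  pose proof (sqrt_pos (1+x^2)). assert (sqrt (1+x^2) >= 1) by nra.
  split. apply Rinv_0_lt_compat; lra. apply Rle_trans with (/1); [apply Rinv_le_contravar; lra| rewrite Rinv_1; lra].
Qed.

Lemma LB_invsq d : 0 <= d -> LB (fun _ b => / sqrt (1 + (clamp (-d) d b)^2)).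
Proof.
  intros Hd. exists 1, 1. split;[lra|split;[lra|]]. intros. split.
  pose proof (invsq_bound (clamp (-d) d b)). rewrite Rabs_right; lra.
  eapply Rle_trans. apply invsq_lip. pose proof (clamp_lip (-d) d b b'). pose proof (Rabs_pos (a-a')). lra.
Qed.

Lemma LB_bound f : LB f -> exists M, 0 <= M /\ forall a b, Rabs (f a b) <= M.
Proof. intros [M [L [HM [HL H]]]]. exists M. split; auto. intros; apply (H a b a b). Qed.

Lemma LB_lip f : LB f -> exists L, 0 < L /\ forall a b a' b', Rabs (f a b - f a' b') <= L * (Rabs (a - a') + Rabs (b - b')).
Proof. intros [M [L [HM [HL H]]]]. exists (L+1). split; [lra|]. intros. destruct (H a b a' b') as [_ B].
  pose proof (Rabs_pos (a-a')); pose proof (Rabs_pos (b-b')). nra. Qed.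

Lemma LB_cont f (u v : R -> R) t : LB f -> continuity_pt u t -> continuity_pt v t ->
  continuity_pt (fun s => f (u s) (v s)) t.
Proof.
  intros Hf Hu Hv. destruct (LB_lip f Hf) as [L [HL H]]. apply cont_eps. intros eps Heps.
  destruct (cont_eps_inv u t Hu (eps / (2*L))) as [d1 [Hd1 H1]]. apply Rdiv_lt_0_compat; lra.
  destruct (cont_eps_inv v t Hv (eps / (2*L))) as [d2 [Hd2 H2]]. apply Rdiv_lt_0_compat; lra.
  exists (Rmin d1 d2). split. apply Rmin_pos; lra. intros y Hy.
  assert (Rabs (y - t) < d1) by (eapply Rlt_le_trans; [apply Hy| apply Rmin_l]).
  assert (Rabs (y - t) < d2) by (eapply Rlt_le_trans; [apply Hy| apply Rmin_r]).
  specialize (H1 y H0). specialize (H2 y H3).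
  eapply Rle_lt_trans. apply H.
  replace eps with (L * (eps / (2*L) + eps/(2*L)) ) by (field; lra).
  apply Rmult_lt_compat_l; lra.
Qed.


Lemma cont_to_C f x : continuity_pt f x -> continuous f x.
Proof. intros H. apply continuity_pt_filterlim. exact H. Qed.

Lemma RInt_ex g a b : (forall x, continuity_pt g x) -> ex_RInt g a b.
Proof. intros H. apply (ex_RInt_continuous (V:=R_CompleteNormedModule)). intros. apply cont_to_C, H. Qed.

Lemma RInt_deriv g t : (forall x, continuity_pt g x) ->
  derivable_pt_lim (fun t => RInt g 0 t) t (g t).
Proof.
  intros H. apply is_derive_Reals. apply (is_derive_RInt g (fun t => RInt g 0 t) 0 t).
  apply filter_forall. intros b. apply (RInt_correct (V:=R_CompleteNormedModule)). apply RInt_ex; auto.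
  apply cont_to_C, H.
Qed.

Lemma INR_fact_pos n : 0 < INR (fact n).
Proof. apply lt_0_INR. apply lt_O_fact. Qed.

Lemma poly_deriv C n s : derivable_pt_lim (fun s => C * s ^ (S n) / INR (fact (S n))) s (C * s ^ n / INR (fact n)).
Proof.
  pose proof (derivable_pt_lim_pow s (S n)) as H.
  assert (H2 := derivable_pt_lim_scal _ (C / INR (fact (S n))) _ _ H).
  unfold mult_real_fct in H2.
  replace (C * s ^ n / INR (fact n)) with (C / INR (fact (S n)) * (INR (S n) * s ^ Init.Nat.pred (S n))).
  eapply derivable_pt_lim_ext; [|exact H2]. intros; simpl; unfold Rdiv; ring.
  simpl pred. rewrite fact_simpl, mult_INR. pose proof (INR_fact_pos n).
  assert (0 < INR (S n)) by (apply lt_0_INR; lia). field. lra.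
Qed.

Lemma poly_deriv_neg C n s : derivable_pt_lim (fun s => - (C * (-s) ^ (S n) / INR (fact (S n)))) s (C * (-s) ^ n / INR (fact n)).
Proof.
  pose proof (poly_deriv C n (-s)) as H.
  pose proof (derivable_pt_lim_comp (fun s => -s) (fun s => C * s ^ (S n) / INR (fact (S n))) s (-1) _
     (derivable_pt_lim_opp _ _ _ (derivable_pt_lim_id s)) H) as H2.
  pose proof (derivable_pt_lim_opp _ _ _ H2) as H3.
  eapply derivable_pt_lim_ext; [| replace (C * (-s) ^ n / INR (fact n)) with
    (- (C * (- s) ^ n / INR (fact n) * -1)) by ring; exact H3].
  intros; reflexivity.
Qed.

Lemma IntB_pos g t C n : (forall x, continuity_pt g x) -> 0 <= C -> 0 <= t ->
  (forall s, 0 <= s <= t -> Rabs (g s) <= C * s ^ n / INR (fact n)) ->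
  Rabs (RInt g 0 t) <= C * t ^ (S n) / INR (fact (S n)).
Proof.
  intros Hg HC Ht Hb.
  assert (Hga : forall x, continuity_pt (fun s => Rabs (g s)) x).
  { intros x. apply (continuity_pt_comp g Rabs). apply Hg. apply Rcontinuity_abs. }
  pose proof (INR_fact_pos n). pose proof (INR_fact_pos (S n)).
  assert (Hpc : forall x, continuity_pt (fun s => C * s ^ n / INR (fact n)) x).
  { intros; reg. }
    eapply Rle_trans. apply abs_RInt_le; auto. apply RInt_ex; auto.
    eapply Rle_trans. apply (RInt_le _ (fun s => C * s ^ n / INR (fact n))); auto.
    apply RInt_ex; auto. apply RInt_ex; auto.
    intros x Hx. apply Hb; lra.
    right. apply is_RInt_unique.
    replace (C * t ^ S n / INR (fact (S n))) with
      (minus (C * t ^ (S n) / INR (fact (S n))) (C * 0 ^ (S n) / INR (fact (S n)))).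
    apply (is_RInt_derive (fun s => C * s ^ (S n) / INR (fact (S n)))).
    intros; apply is_derive_Reals, poly_deriv.
    intros. apply cont_to_C. apply Hpc.
    unfold minus, plus, opp; simpl. rewrite Rmult_0_l, Rmult_0_r. unfold Rdiv. rewrite Rmult_0_l, Ropp_0, Rplus_0_r. reflexivity.
Qed.

Lemma IntB g t C n : (forall x, continuity_pt g x) -> 0 <= C ->
  (forall s, Rmin 0 t <= s <= Rmax 0 t -> Rabs (g s) <= C * Rabs s ^ n / INR (fact n)) ->
  Rabs (RInt g 0 t) <= C * Rabs t ^ (S n) / INR (fact (S n)).
Proof.
  intros Hg HC Hb.
  destruct (Rle_or_lt 0 t) as [Ht|Ht].
  - rewrite (Rabs_right t) by lra. apply IntB_pos; auto.
    intros s Hs. rewrite <- (Rabs_right s) at 2 by lra. apply Hb.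
    rewrite Rmin_left, Rmax_right; lra.
  - assert (E : RInt g 0 t = RInt (fun y => scal (-1) (g (-1 * y + 0))) 0 (-t)).
    { rewrite (RInt_comp_lin (V:=R_CompleteNormedModule)). f_equal; ring. apply RInt_ex; auto. }
    rewrite E. rewrite (RInt_scal (V:=R_CompleteNormedModule)).
    assert (Hsc: forall z:R, scal (-1) z = - z) by (intros; unfold scal; simpl; unfold mult; simpl; ring).
    rewrite Hsc, Rabs_Ropp.
    rewrite (Rabs_left t) by lra. apply IntB_pos; auto.
    intros x. apply (continuity_pt_comp (fun y => -1 * y + 0) g).
    apply derivable_continuous_pt. apply derivable_pt_plus. apply derivable_pt_scal, derivable_pt_id.
    apply derivable_pt_const. apply Hg. lra.
    intros s Hs. replace s with (Rabs (-1 * s + 0)) at 2.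
    apply Hb. rewrite Rmin_right, Rmax_left; lra.
    rewrite Rabs_left1; lra.
    apply RInt_ex. intros x. apply (continuity_pt_comp (fun y => -1 * y + 0) g).
    apply derivable_continuous_pt. apply derivable_pt_plus. apply derivable_pt_scal, derivable_pt_id.
    apply derivable_pt_const. apply Hg.
Qed.


Fixpoint pic (F1 F2 : R -> R -> R) (x0 y0 : R) (n : nat) : R -> R * R :=
  match n with
  | O => fun _ => (x0, y0)
  | S n => fun t => (x0 + RInt (fun s => F1 (fst (pic F1 F2 x0 y0 n s)) (snd (pic F1 F2 x0 y0 n s))) 0 t,
                     y0 + RInt (fun s => F2 (fst (pic F1 F2 x0 y0 n s)) (snd (pic F1 F2 x0 y0 n s))) 0 t)
  end.

Lemma deriv_const_plus c g t : (forall x, continuity_pt g x) ->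
  derivable_pt_lim (fun t => c + RInt g 0 t) t (g t).
Proof.
  intros H. replace (g t) with (0 + g t) by ring. apply derivable_pt_lim_plus.
  apply derivable_pt_lim_const. apply RInt_deriv; auto.
Qed.

Lemma pic_cont F1 F2 x0 y0 n : LB F1 -> LB F2 -> forall t,
  continuity_pt (fun t => fst (pic F1 F2 x0 y0 n t)) t /\ continuity_pt (fun t => snd (pic F1 F2 x0 y0 n t)) t.
Proof.
  intros H1 H2. induction n as [|n IH]; intros t; simpl.
  - split; apply continuity_pt_const; intros ? ?; reflexivity.
  - split; eapply dlim_cont; apply deriv_const_plus; intros x;
    apply LB_cont; auto; apply IH.
Qed.

Lemma comp_cont F1 F2 x0 y0 n (F : R -> R -> R) : LB F1 -> LB F2 -> LB F -> forall t,
  continuity_pt (fun s => F (fst (pic F1 F2 x0 y0 n s)) (snd (pic F1 F2 x0 y0 n s))) t.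
Proof. intros. apply LB_cont; auto; apply pic_cont; auto. Qed.

Lemma RInt_minus' f g a b : (forall x, continuity_pt f x) -> (forall x, continuity_pt g x) ->
  RInt (fun s => f s - g s) a b = RInt f a b - RInt g a b.
Proof.
  intros Hf Hg. apply (RInt_minus (V:=R_CompleteNormedModule)); apply RInt_ex; auto.
Qed.

Lemma nat_unbounded r : exists N : nat, r <= INR N.
Proof.
  destruct (archimed (Rabs r)) as [H1 H2]. exists (Z.to_nat (up (Rabs r))).
  rewrite INR_IZR_INZ, Z2Nat.id. pose proof (Rle_abs r). lra.
  apply le_IZR. pose proof (Rabs_pos r). lra.
Qed.


Definition bb M L B n := 2 * M * (2 * L) ^ n * B ^ (S n) / INR (fact (S n)).

Lemma bb_nonneg M L B n : 0 <= M -> 0 <= L -> 0 <= B -> 0 <= bb M L B n.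
Proof.
  intros. unfold bb. pose proof (INR_fact_pos (S n)).
  apply Rmult_le_pos. repeat apply Rmult_le_pos; try lra; apply pow_le; lra.
  left; apply Rinv_0_lt_compat; lra.
Qed.

Lemma bb_mono M L B1 B2 n : 0 <= M -> 0 <= L -> 0 <= B1 <= B2 -> bb M L B1 n <= bb M L B2 n.
Proof.
  intros. unfold bb. pose proof (INR_fact_pos (S n)). unfold Rdiv.
  apply Rmult_le_compat_r. left; apply Rinv_0_lt_compat; lra.
  apply Rmult_le_compat_l. apply Rmult_le_pos; [lra| apply pow_le; lra].
  apply pow_incr; lra.
Qed.

Lemma bb_step M L B n : 0 <= M -> 0 < L -> 0 <= B -> 4 * L * B <= INR (S (S n)) ->
  bb M L B (S n) <= bb M L B n / 2.
Proof.
  intros. unfold bb. rewrite (fact_simpl (S n)), mult_INR.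
  pose proof (INR_fact_pos (S n)).
  assert (HS: 0 < INR (S (S n))) by (apply lt_0_INR; lia).
  replace (2 * M * (2 * L) ^ S n * B ^ S (S n) / (INR (S (S n)) * INR (fact (S n))))
    with ((2 * M * (2 * L) ^ n * B ^ S n / INR (fact (S n))) * (2 * L * B / INR (S (S n)))).
  2:{ change ((2*L)^S n) with (2*L*(2*L)^n). change (B ^ S (S n)) with (B * B ^ S n). field. split; lra. }
  set (q := 2 * M * (2 * L) ^ n * B ^ S n / INR (fact (S n))).
  assert (0 <= q) by (apply (bb_nonneg M L B n); lra).
  assert (2 * L * B / INR (S (S n)) <= / 2).
  { apply (Rmult_le_reg_r (INR (S (S n)))); auto. unfold Rdiv. rewrite Rmult_assoc, Rinv_l by lra. lra. }
  unfold Rdiv at 2. apply Rmult_le_compat_l; auto.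
Qed.

Lemma bb_small M L B eps : 0 <= M -> 0 < L -> 0 <= B -> eps > 0 ->
  exists N, forall n, (n >= N)%nat -> bb M L B n < eps.
Proof.
  intros HM HL HB He. destruct (cv_speed_pow_fact (2 * L * B) (eps * L / (M + 1))) as [N HN].
  apply Rdiv_lt_0_compat; nra.
  exists N. intros n Hn. specialize (HN (S n) ltac:(lia)). unfold R_dist in HN.
  rewrite Rminus_0_r in HN.
  assert (E : bb M L B n = M / L * ((2 * L * B) ^ S n / INR (fact (S n)))).
  { unfold bb. rewrite (Rpow_mult_distr (2*L) B). change ((2*L)^S n) with (2*L*(2*L)^n). field. pose proof (INR_fact_pos (S n)). split; lra. }
  rewrite E. pose proof (INR_fact_pos (S n)).
  assert (0 <= (2 * L * B) ^ S n / INR (fact (S n))).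
  { apply Rmult_le_pos. apply pow_le; nra. left; apply Rinv_0_lt_compat; lra. }
  rewrite Rabs_right in HN by lra.
  apply Rle_lt_trans with ((M+1) / L * ((2 * L * B) ^ S n / INR (fact (S n)))).
  apply Rmult_le_compat_r; auto. unfold Rdiv; apply Rmult_le_compat_r. left; apply Rinv_0_lt_compat; lra. lra.
  apply Rlt_le_trans with ((M+1)/L * (eps * L / (M + 1))).
  apply Rmult_lt_compat_l; auto. apply Rdiv_lt_0_compat; lra.
  right. field. lra.
Qed.


Lemma lim_cauchy (u : nat -> R) : (forall eps, eps > 0 -> exists N, forall p q, (p >= N)%nat -> (q >= N)%nat -> Rabs (u p - u q) < eps) ->
  Un_cv u (real (Lim_seq u)).
Proof.
  intros H. assert (Hc : ex_lim_seq_cauchy u).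
  { intros eps. destruct (H eps (cond_pos eps)) as [N HN]. exists N. intros; apply HN; lia. }
  apply ex_lim_seq_cauchy_corr in Hc. destruct Hc as [l Hl].
  rewrite (is_lim_seq_unique _ _ Hl). simpl. apply is_lim_seq_Reals. exact Hl.
Qed.

Lemma sum_tri a b c : Rabs (a - c) <= Rabs (a - b) + Rabs (b - c).
Proof. replace (a - c) with ((a - b) + (b - c)) by ring. apply Rabs_triang. Qed.

Lemma RInt_diff_eq f g (c t : R) : (forall x, continuity_pt f x) -> (forall x, continuity_pt g x) ->
  c + RInt f 0 t - (c + RInt g 0 t) = RInt (fun s => f s - g s) 0 t.
Proof. intros. rewrite RInt_minus' by auto. ring. Qed.

Theorem picard F1 F2 x0 y0 : LB F1 -> LB F2 -> exists th rh : R -> R, th 0 = x0 /\ rh 0 = y0 /\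
  forall t, derivable_pt_lim th t (F1 (th t) (rh t)) /\ derivable_pt_lim rh t (F2 (th t) (rh t)).
Proof.
  intros HF1 HF2.
  destruct HF1 as [M1 [L1 [HM1 [HL1 H1]]]]. destruct HF2 as [M2 [L2 [HM2 [HL2 H2]]]].
  assert (LF1 : LB F1) by (exists M1, L1; auto). assert (LF2 : LB F2) by (exists M2, L2; auto).
  set (M := M1 + M2 + 1). set (L := L1 + L2 + 1).
  assert (HM : 0 < M) by (unfold M; lra). assert (HL : 0 < L) by (unfold L; lra).
  assert (HB1 : forall a b, Rabs (F1 a b) <= M) by (intros; destruct (H1 a b a b); unfold M; lra).
  assert (HB2 : forall a b, Rabs (F2 a b) <= M) by (intros; destruct (H2 a b a b); unfold M; lra).
  assert (HLi1 : forall a b a' b', Rabs (F1 a b - F1 a' b') <= L * (Rabs (a - a') + Rabs (b - b'))).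
  { intros. destruct (H1 a b a' b') as [_ X]. pose proof (Rabs_pos (a - a')). pose proof (Rabs_pos (b - b')).
    unfold L. nra. }
  assert (HLi2 : forall a b a' b', Rabs (F2 a b - F2 a' b') <= L * (Rabs (a - a') + Rabs (b - b'))).
  { intros. destruct (H2 a b a' b') as [_ X]. pose proof (Rabs_pos (a - a')). pose proof (Rabs_pos (b - b')).
    unfold L. nra. }
  clear H1 H2 HM1 HM2 HL1 HL2.
  set (xs := fun n t => fst (pic F1 F2 x0 y0 n t)).
  set (ys := fun n t => snd (pic F1 F2 x0 y0 n t)).
  assert (Ex : forall n t, xs (S n) t = x0 + RInt (fun s => F1 (xs n s) (ys n s)) 0 t) by reflexivity.
  assert (Ey : forall n t, ys (S n) t = y0 + RInt (fun s => F2 (xs n s) (ys n s)) 0 t) by reflexivity.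
  assert (Cx : forall n t, continuity_pt (xs n) t) by (intros; apply pic_cont; auto).
  assert (Cy : forall n t, continuity_pt (ys n) t) by (intros; apply pic_cont; auto).
  assert (CF1 : forall n t, continuity_pt (fun s => F1 (xs n s) (ys n s)) t) by (intros; apply LB_cont; auto).
  assert (CF2 : forall n t, continuity_pt (fun s => F2 (xs n s) (ys n s)) t) by (intros; apply LB_cont; auto).
  assert (D : forall n t, Rabs (xs (S n) t - xs n t) + Rabs (ys (S n) t - ys n t) <= bb M L (Rabs t) n).
  { induction n as [|n IH]; intros t.
    - rewrite Ex, Ey. change (xs 0%nat t) with x0. change (ys 0%nat t) with y0.
      assert (Eab : forall a b : R, a + b - a = b) by (intros; ring). rewrite !Eab.
      assert (A1 := IntB (fun s => F1 (xs 0%nat s) (ys 0%nat s)) t M 0%nat (CF1 0%nat) ltac:(lra)).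
      assert (A2 := IntB (fun s => F2 (xs 0%nat s) (ys 0%nat s)) t M 0%nat (CF2 0%nat) ltac:(lra)).
      simpl in A1, A2. unfold bb. simpl.
      assert (Rabs (RInt (fun s => F1 (xs 0%nat s) (ys 0%nat s)) 0 t) <= M * (Rabs t * 1) / 1).
      { apply A1. intros; rewrite Rmult_1_r, Rdiv_1_r. apply HB1. }
      assert (Rabs (RInt (fun s => F2 (xs 0%nat s) (ys 0%nat s)) 0 t) <= M * (Rabs t * 1) / 1).
      { apply A2. intros; rewrite Rmult_1_r, Rdiv_1_r. apply HB2. }
      rewrite Rdiv_1_r in *. lra.
    - rewrite (Ex (S n)), (Ey (S n)), (Ex n), (Ey n).
      rewrite !RInt_diff_eq by auto.
      set (C := L * (2 * M * (2 * L) ^ n)).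
      assert (HC : 0 <= C) by (unfold C; apply Rmult_le_pos; [lra|]; apply Rmult_le_pos; [lra| apply pow_le; lra]).
      assert (Hb : forall s, L * (Rabs (xs (S n) s - xs n s) + Rabs (ys (S n) s - ys n s)) <= C * Rabs s ^ S n / INR (fact (S n))).
      { intros s. specialize (IH s). unfold bb in IH. unfold C.
        replace (L * (2 * M * (2 * L) ^ n) * Rabs s ^ S n / INR (fact (S n))) with (L * (2 * M * (2 * L) ^ n * Rabs s ^ S n / INR (fact (S n)))) by (unfold Rdiv; ring).
        apply Rmult_le_compat_l; lra. }
      assert (A1 : Rabs (RInt (fun s => F1 (xs (S n) s) (ys (S n) s) - F1 (xs n s) (ys n s)) 0 t) <= C * Rabs t ^ S (S n) / INR (fact (S (S n)))).
      { apply IntB; auto. intros x; apply continuity_pt_minus; auto. intros s _.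
        eapply Rle_trans; [apply HLi1| apply Hb]. }
      assert (A2 : Rabs (RInt (fun s => F2 (xs (S n) s) (ys (S n) s) - F2 (xs n s) (ys n s)) 0 t) <= C * Rabs t ^ S (S n) / INR (fact (S (S n)))).
      { apply IntB; auto. intros x; apply continuity_pt_minus; auto. intros s _.
        eapply Rle_trans; [apply HLi2| apply Hb]. }
      replace (bb M L (Rabs t) (S n)) with (2 * (C * Rabs t ^ S (S n) / INR (fact (S (S n))))).
      lra. unfold bb, C. change ((2 * L) ^ S n) with (2 * L * (2 * L) ^ n). unfold Rdiv. ring. }
  assert (DB : forall n t B, Rabs t <= B -> Rabs (xs (S n) t - xs n t) + Rabs (ys (S n) t - ys n t) <= bb M L B n).
  { intros. eapply Rle_trans. apply D. apply bb_mono; try lra. split; auto. apply Rabs_pos. }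
  assert (Cau : forall B, 0 <= B -> exists N, forall t, Rabs t <= B -> forall n, (n >= N)%nat -> forall k,
     Rabs (xs (n + k)%nat t - xs n t) + Rabs (ys (n + k)%nat t - ys n t) <= 2 * bb M L B n - 2 * bb M L B (n + k)).
  { intros B HB. destruct (nat_unbounded (4 * L * B)) as [N HN]. exists N. intros t Ht n Hn k.
    induction k as [|k IHk].
    - rewrite Nat.add_0_r. unfold Rminus; rewrite !Rplus_opp_r, Rabs_R0. lra.
    - rewrite Nat.add_succ_r.
      assert (St := bb_step M L B (n + k) ltac:(lra) HL HB).
      assert (4 * L * B <= INR (S (S (n + k)))). { eapply Rle_trans. apply HN. apply le_INR. lia. }
      specialize (St H). specialize (DB (n + k)%nat t B Ht).
      pose proof (sum_tri (xs (S (n + k)) t) (xs (n + k)%nat t) (xs n t)).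
      pose proof (sum_tri (ys (S (n + k)) t) (ys (n + k)%nat t) (ys n t)).
      lra. }
  set (X := fun t => real (Lim_seq (fun n => xs n t))).
  set (Y := fun t => real (Lim_seq (fun n => ys n t))).
  assert (Conv : forall t, Un_cv (fun n => xs n t) (X t) /\ Un_cv (fun n => ys n t) (Y t)).
  { intros t. destruct (Cau (Rabs t) (Rabs_pos t)) as [N HN].
    assert (Hc : forall eps, eps > 0 -> exists N, forall p q, (p >= N)%nat -> (q >= N)%nat ->
       Rabs (xs p t - xs q t) < eps /\ Rabs (ys p t - ys q t) < eps).
    { intros eps He. destruct (bb_small M L (Rabs t) (eps / 8) ltac:(lra) HL (Rabs_pos t) ltac:(lra)) as [N1 HN1].
      exists (max N N1). intros p q Hp Hq. set (n0 := max N N1).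
      assert (A := HN t (Rle_refl _) n0 ltac:(lia) (p - n0)%nat).
      assert (B := HN t (Rle_refl _) n0 ltac:(lia) (q - n0)%nat).
      replace (n0 + (p - n0))%nat with p in A by lia. replace (n0 + (q - n0))%nat with q in B by lia.
      specialize (HN1 n0 ltac:(lia)).
      pose proof (bb_nonneg M L (Rabs t) p ltac:(lra) ltac:(lra) (Rabs_pos t)).
      pose proof (bb_nonneg M L (Rabs t) q ltac:(lra) ltac:(lra) (Rabs_pos t)).
      pose proof (Rabs_pos (xs p t - xs n0 t)). pose proof (Rabs_pos (ys p t - ys n0 t)).
      pose proof (Rabs_pos (xs q t - xs n0 t)). pose proof (Rabs_pos (ys q t - ys n0 t)).
      pose proof (sum_tri (xs p t) (xs n0 t) (xs q t)). pose proof (sum_tri (ys p t) (ys n0 t) (ys q t)).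
      rewrite <- (Rabs_Ropp (xs n0 t - xs q t)) in *. rewrite <- (Rabs_Ropp (ys n0 t - ys q t)) in *.
      replace (- (xs n0 t - xs q t)) with (xs q t - xs n0 t) in * by ring.
      replace (- (ys n0 t - ys q t)) with (ys q t - ys n0 t) in * by ring.
      split; lra. }
    split; apply lim_cauchy; intros eps He; destruct (Hc eps He) as [N0 HN0]; exists N0; intros; apply HN0; auto. }
  assert (Xb : forall B, 0 <= B -> exists N, forall t, Rabs t <= B -> forall n, (n >= N)%nat ->
      Rabs (X t - xs n t) + Rabs (Y t - ys n t) <= 2 * bb M L B n).
  { intros B HB. destruct (Cau B HB) as [N HN]. exists N. intros t Ht n Hn.
    apply Rle_plus_epsilon. intros eps He.
    destruct (Conv t) as [C1 C2]. destruct (C1 (eps/2) ltac:(lra)) as [N1 HN1].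
    destruct (C2 (eps/2) ltac:(lra)) as [N2 HN2].
    set (p := max n (max N1 N2)).
    specialize (HN1 p ltac:(lia)). specialize (HN2 p ltac:(lia)). unfold R_dist in HN1, HN2.
    assert (A := HN t Ht n Hn (p - n)%nat). replace (n + (p - n))%nat with p in A by lia.
    pose proof (bb_nonneg M L B p ltac:(lra) ltac:(lra) HB).
    pose proof (sum_tri (X t) (xs p t) (xs n t)). pose proof (sum_tri (Y t) (ys p t) (ys n t)).
    rewrite <- (Rabs_Ropp (X t - xs p t)), <- (Rabs_Ropp (Y t - ys p t)) in *.
    replace (- (X t - xs p t)) with (xs p t - X t) in * by ring.
    replace (- (Y t - ys p t)) with (ys p t - Y t) in * by ring.
    lra. }
  assert (XC : forall t, continuity_pt X t /\ continuity_pt Y t).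
  { intros t. set (B := Rabs t + 1). assert (HB : 0 <= B) by (unfold B; pose proof (Rabs_pos t); lra).
    destruct (Xb B HB) as [N HN].
    split; apply cont_eps; intros eps He;
    destruct (bb_small M L B (eps / 8) ltac:(lra) HL HB ltac:(lra)) as [N1 HN1];
    set (n := max N N1); specialize (HN1 n ltac:(lia)).
    - destruct (cont_eps_inv _ _ (Cx n t) (eps/2) ltac:(lra)) as [d [Hd Hd']].
      exists (Rmin 1 d). split. apply Rmin_pos; lra. intros y Hy.
      assert (Hy1 : Rabs (y - t) < 1) by (eapply Rlt_le_trans; [apply Hy| apply Rmin_l]).
      assert (Hy2 : Rabs (y - t) < d) by (eapply Rlt_le_trans; [apply Hy| apply Rmin_r]).
      assert (Ay : Rabs y <= B). { unfold B. pose proof (sum_tri y t 0). rewrite !Rminus_0_r in H. lra. }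
      assert (At : Rabs t <= B) by (unfold B; lra).
      pose proof (HN y Ay n ltac:(lia)). pose proof (HN t At n ltac:(lia)). specialize (Hd' y Hy2).
      pose proof (Rabs_pos (Y y - ys n y)). pose proof (Rabs_pos (Y t - ys n t)).
      pose proof (sum_tri (X y) (xs n y) (X t)). pose proof (sum_tri (xs n y) (xs n t) (X t)).
      rewrite <- (Rabs_Ropp (xs n t - X t)) in *. replace (- (xs n t - X t)) with (X t - xs n t) in * by ring.
      lra.
    - destruct (cont_eps_inv _ _ (Cy n t) (eps/2) ltac:(lra)) as [d [Hd Hd']].
      exists (Rmin 1 d). split. apply Rmin_pos; lra. intros y Hy.
      assert (Hy1 : Rabs (y - t) < 1) by (eapply Rlt_le_trans; [apply Hy| apply Rmin_l]).
      assert (Hy2 : Rabs (y - t) < d) by (eapply Rlt_le_trans; [apply Hy| apply Rmin_r]).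
      assert (Ay : Rabs y <= B). { unfold B. pose proof (sum_tri y t 0). rewrite !Rminus_0_r in H. lra. }
      assert (At : Rabs t <= B) by (unfold B; lra).
      pose proof (HN y Ay n ltac:(lia)). pose proof (HN t At n ltac:(lia)). specialize (Hd' y Hy2).
      pose proof (Rabs_pos (X y - xs n y)). pose proof (Rabs_pos (X t - xs n t)).
      pose proof (sum_tri (Y y) (ys n y) (Y t)). pose proof (sum_tri (ys n y) (ys n t) (Y t)).
      rewrite <- (Rabs_Ropp (ys n t - Y t)) in *. replace (- (ys n t - Y t)) with (Y t - ys n t) in * by ring.
      lra. }
  assert (GC1 : forall t, continuity_pt (fun s => F1 (X s) (Y s)) t) by (intros; apply LB_cont; auto; apply XC).
  assert (GC2 : forall t, continuity_pt (fun s => F2 (X s) (Y s)) t) by (intros; apply LB_cont; auto; apply XC).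
  assert (XI : forall t, X t = x0 + RInt (fun s => F1 (X s) (Y s)) 0 t /\ Y t = y0 + RInt (fun s => F2 (X s) (Y s)) 0 t).
  { intros t. set (B := Rabs t). assert (HB : 0 <= B) by apply Rabs_pos.
    destruct (Xb B HB) as [N HN].
    assert (Key : forall eps, eps > 0 -> Rabs (X t - (x0 + RInt (fun s => F1 (X s) (Y s)) 0 t)) <= eps /\ Rabs (Y t - (y0 + RInt (fun s => F2 (X s) (Y s)) 0 t)) <= eps).
    { intros eps He. set (e' := eps / (4 * (L * (B + 1) + 1))).
      assert (He' : 0 < e') by (unfold e'; apply Rdiv_lt_0_compat; nra).
      destruct (bb_small M L B e' ltac:(lra) HL HB He') as [N1 HN1].
      set (n := max N N1).
      assert (b1 := HN1 n ltac:(lia)). assert (b2 := HN1 (S n) ltac:(lia)).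
      assert (Hx1 := HN t (Rle_refl _) (S n) ltac:(lia)).
      assert (Hin : forall s, Rmin 0 t <= s <= Rmax 0 t -> Rabs s <= B).
      { intros s Hs. unfold B, Rmin, Rmax in *. destruct Rle_dec; apply Rabs_le;
        pose proof (Rle_abs t); pose proof (Rle_abs (-t)); rewrite Rabs_Ropp in *; lra. }
      assert (Hd : forall s, Rmin 0 t <= s <= Rmax 0 t -> Rabs (xs n s - X s) + Rabs (ys n s - Y s) <= 2 * bb M L B n).
      { intros s Hs. rewrite <- (Rabs_Ropp (xs n s - X s)), <- (Rabs_Ropp (ys n s - Y s)).
        replace (- (xs n s - X s)) with (X s - xs n s) by ring.
        replace (- (ys n s - Y s)) with (Y s - ys n s) by ring. apply HN; auto. lia. }
      pose proof (bb_nonneg M L B n ltac:(lra) ltac:(lra) HB).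
      assert (I1 : Rabs (RInt (fun s => F1 (xs n s) (ys n s) - F1 (X s) (Y s)) 0 t) <= (L * (2 * bb M L B n)) * Rabs t ^ 1 / INR (fact 1)).
      { apply IntB. intros; apply continuity_pt_minus; auto. nra.
        intros s Hs. simpl. rewrite Rmult_1_r, Rdiv_1_r. eapply Rle_trans. apply HLi1.
        apply Rmult_le_compat_l; [lra|]. apply Hd; auto. }
      assert (I2 : Rabs (RInt (fun s => F2 (xs n s) (ys n s) - F2 (X s) (Y s)) 0 t) <= (L * (2 * bb M L B n)) * Rabs t ^ 1 / INR (fact 1)).
      { apply IntB. intros; apply continuity_pt_minus; auto. nra.
        intros s Hs. simpl. rewrite Rmult_1_r, Rdiv_1_r. eapply Rle_trans. apply HLi2.
        apply Rmult_le_compat_l; [lra|]. apply Hd; auto. }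
      simpl in I1, I2. rewrite Rmult_1_r, Rdiv_1_r in I1, I2.
      rewrite <- RInt_diff_eq with (c := x0) in I1 by auto.
      rewrite <- RInt_diff_eq with (c := y0) in I2 by auto.
      rewrite <- Ex in I1. rewrite <- Ey in I2.
      pose proof (sum_tri (X t) (xs (S n) t) (x0 + RInt (fun s => F1 (X s) (Y s)) 0 t)).
      pose proof (sum_tri (Y t) (ys (S n) t) (y0 + RInt (fun s => F2 (X s) (Y s)) 0 t)).
      assert (Lb : L * (2 * bb M L B n) * B <= 2 * L * B * e'). { assert (0 <= L * B) by nra. nra. }
      assert (2 * e' + 2 * L * B * e' <= eps).
      { unfold e'. assert (HD : 0 < L * (B + 1) + 1) by nra.
        set (DD := L * (B + 1) + 1) in *.
        apply (Rmult_le_reg_r (4 * DD)). lra. unfold Rdiv.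
        replace ((2 * (eps * / (4 * DD)) + 2 * L * B * (eps * / (4 * DD))) * (4 * DD))
          with (eps * (2 + 2 * L * B)) by (field; apply Rgt_not_eq; exact HD). unfold DD. assert (0 <= eps * (L * B)) by (apply Rmult_le_pos; nra). assert (0 <= eps*L) by nra. nra. }
      pose proof (Rabs_pos (X t - xs (S n) t)). pose proof (Rabs_pos (Y t - ys (S n) t)).
      fold B in I1, I2. split; [eapply Rle_trans; [apply H0|] | eapply Rle_trans; [apply H1|]]; lra. }
    split; apply Rminus_diag_uniq; apply Rabs_eq_0; apply Rle_antisym; try apply Rabs_pos;
    apply Rle_plus_epsilon; intros eps He; rewrite Rplus_0_l; apply Key; lra. }
  exists X, Y. split; [|split].
  - etransitivity; [apply (proj1 (XI 0))|]. rewrite RInt_point. unfold zero; simpl; ring.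
  - etransitivity; [apply (proj2 (XI 0))|]. rewrite RInt_point. unfold zero; simpl; ring.
  - intros t. split.
    + apply (derivable_pt_lim_ext (fun t => x0 + RInt (fun s => F1 (X s) (Y s)) 0 t) X).
      intros z; symmetry; apply (proj1 (XI z)). apply (deriv_const_plus x0 (fun s => F1 (X s) (Y s)) t); auto.
    + apply (derivable_pt_lim_ext (fun t => y0 + RInt (fun s => F2 (X s) (Y s)) 0 t) Y).
      intros z; symmetry; apply (proj2 (XI z)). apply (deriv_const_plus y0 (fun s => F2 (X s) (Y s)) t); auto.
Qed.


Lemma mono_le f f' a b : a <= b -> (forall t, a <= t <= b -> derivable_pt_lim f t (f' t)) ->
  (forall t, a <= t <= b -> f' t <= 0) -> f b <= f a.
Proof.
  intros Hab Hd Hs. destruct (Req_dec a b) as [->|Hne]. lra.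
  destruct (MVT_cor2 f f' a b ltac:(lra) Hd) as [c [Hc Hc']].
  assert (f' c <= 0) by (apply Hs; lra). nra.
Qed.

Lemma mono_ge f f' a b : a <= b -> (forall t, a <= t <= b -> derivable_pt_lim f t (f' t)) ->
  (forall t, a <= t <= b -> 0 <= f' t) -> f a <= f b.
Proof.
  intros Hab Hd Hs. destruct (Req_dec a b) as [->|Hne]. lra.
  destruct (MVT_cor2 f f' a b ltac:(lra) Hd) as [c [Hc Hc']].
  assert (0 <= f' c) by (apply Hs; lra). nra.
Qed.

Lemma sq_deriv u v u' v' t : derivable_pt_lim u t u' -> derivable_pt_lim v t v' ->
  derivable_pt_lim (fun t => (u t - v t) ^ 2) t (2 * (u t - v t) * (u' - v')).
Proof.
  intros Hu Hv.
  assert (H := derivable_pt_lim_comp (fun t => u t - v t) (fun x => x ^ 2) t (u' - v') _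
     (derivable_pt_lim_minus _ _ _ _ _ Hu Hv) (derivable_pt_lim_pow (u t - v t) 2)).
  unfold comp in H. simpl in H.
  eapply derivable_pt_lim_ext; [| replace (2 * (u t - v t) * (u' - v')) with (2 * ((u t - v t) * 1) * (u' - v')) by ring; exact H].
  intros; reflexivity.
Qed.

Lemma uniq2 F1 F2 T th1 rh1 th2 rh2 : LB F1 -> LB F2 -> 0 <= T ->
  (forall t, 0 <= t <= T -> derivable_pt_lim th1 t (F1 (th1 t) (rh1 t)) /\ derivable_pt_lim rh1 t (F2 (th1 t) (rh1 t))) ->
  (forall t, 0 <= t <= T -> derivable_pt_lim th2 t (F1 (th2 t) (rh2 t)) /\ derivable_pt_lim rh2 t (F2 (th2 t) (rh2 t))) ->
  th1 0 = th2 0 -> rh1 0 = rh2 0 ->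
  forall t, 0 <= t <= T -> th1 t = th2 t /\ rh1 t = rh2 t.
Proof.
  intros H1 H2 HT S1 S2 E1 E2.
  destruct (LB_lip F1 H1) as [La [HLa Ha]]. destruct (LB_lip F2 H2) as [Lb [HLb Hb]].
  set (L := La + Lb).
  set (e := fun t => ((th1 t - th2 t) ^ 2 + (rh1 t - rh2 t) ^ 2) * exp (- (4 * L) * t)).
  set (e' := fun t => (2 * (th1 t - th2 t) * (F1 (th1 t) (rh1 t) - F1 (th2 t) (rh2 t)) +
                       2 * (rh1 t - rh2 t) * (F2 (th1 t) (rh1 t) - F2 (th2 t) (rh2 t))) * exp (- (4 * L) * t)
                      + ((th1 t - th2 t) ^ 2 + (rh1 t - rh2 t) ^ 2) * (exp (- (4 * L) * t) * (- (4 * L)))).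
  assert (Hd : forall t, 0 <= t <= T -> derivable_pt_lim e t (e' t)).
  { intros t Ht. destruct (S1 t Ht) as [A1 B1]. destruct (S2 t Ht) as [A2 B2].
    unfold e, e'.
    apply (derivable_pt_lim_mult (fun t => (th1 t - th2 t) ^ 2 + (rh1 t - rh2 t) ^ 2) (fun t => exp (- (4 * L) * t))).
    apply (derivable_pt_lim_plus (fun t => (th1 t - th2 t) ^ 2) (fun t => (rh1 t - rh2 t) ^ 2)); apply sq_deriv; auto.
    assert (Hx := derivable_pt_lim_comp (fun t => - (4 * L) * t) exp t (- (4 * L) * 1) _
      (derivable_pt_lim_scal _ _ _ _ (derivable_pt_lim_id t)) (derivable_pt_lim_exp (- (4 * L) * t))).
    eapply derivable_pt_lim_ext; [|replace (exp (- (4 * L) * t) * - (4 * L)) with (exp (- (4 * L) * t) * (- (4 * L) * 1)) by ring; exact Hx].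
    intros; reflexivity. }
  assert (Hs : forall t, 0 <= t <= T -> e' t <= 0).
  { intros t Ht. unfold e'. pose proof (exp_pos (- (4 * L) * t)).
    set (x := th1 t - th2 t). set (y := rh1 t - rh2 t).
    set (p := F1 (th1 t) (rh1 t) - F1 (th2 t) (rh2 t)). set (q := F2 (th1 t) (rh1 t) - F2 (th2 t) (rh2 t)).
    assert (Hp : Rabs p <= L * (Rabs x + Rabs y)).
    { eapply Rle_trans. apply Ha. fold x y. pose proof (Rabs_pos x); pose proof (Rabs_pos y). unfold L. nra. }
    assert (Hq : Rabs q <= L * (Rabs x + Rabs y)).
    { eapply Rle_trans. apply Hb. fold x y. pose proof (Rabs_pos x); pose proof (Rabs_pos y). unfold L. nra. }
    assert (x * p <= Rabs x * (L * (Rabs x + Rabs y))).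
    { eapply Rle_trans. apply Rle_abs. rewrite Rabs_mult. apply Rmult_le_compat_l; auto. apply Rabs_pos. }
    assert (y * q <= Rabs y * (L * (Rabs x + Rabs y))).
    { eapply Rle_trans. apply Rle_abs. rewrite Rabs_mult. apply Rmult_le_compat_l; auto. apply Rabs_pos. }
    assert (Rabs x * Rabs x = x ^ 2) by (rewrite <- Rabs_mult; simpl; rewrite Rmult_1_r; apply Rabs_right; nra).
    assert (Rabs y * Rabs y = y ^ 2) by (rewrite <- Rabs_mult; simpl; rewrite Rmult_1_r; apply Rabs_right; nra).
    assert (2 * x * p + 2 * y * q <= 4 * L * (x ^ 2 + y ^ 2)).
    { pose proof (Rabs_pos x); pose proof (Rabs_pos y).
      assert (A : 2 * x * p + 2 * y * q <= 2 * L * (Rabs x + Rabs y) ^ 2) by nra.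
      assert (Bq : (Rabs x + Rabs y) ^ 2 <= 2 * (x ^ 2 + y ^ 2)) by (pose proof (pow2_ge_0 (Rabs x - Rabs y)); nra).
      assert (HL : 0 < L) by (unfold L; lra).
      assert (2 * L * (Rabs x + Rabs y) ^ 2 <= 2 * L * (2 * (x ^ 2 + y ^ 2))) by (apply Rmult_le_compat_l; lra).
      lra. }
    nra. }
  assert (He0 : e 0 = 0). { unfold e. rewrite E1, E2. ring. }
  intros t Ht. assert (Hle := mono_le e e' 0 t ltac:(lra) ltac:(intros; apply Hd; lra) ltac:(intros; apply Hs; lra)).
  rewrite He0 in Hle. unfold e in Hle. pose proof (exp_pos (- (4 * L) * t)).
  assert (Z : (th1 t - th2 t) ^ 2 + (rh1 t - rh2 t) ^ 2 <= 0).
  { apply (Rmult_le_reg_r (exp (- (4 * L) * t))); auto. lra. }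
  pose proof (pow2_ge_0 (th1 t - th2 t)); pose proof (pow2_ge_0 (rh1 t - rh2 t)).
  split; apply Rminus_diag_uniq; apply Rsqr_0_uniq; unfold Rsqr; simpl in *; lra.
Qed.

Lemma cont_ind (g : R -> R) b k : 0 <= b -> 0 < k -> (forall t, 0 <= t <= b -> continuity_pt g t) ->
  Rabs (g 0) <= k -> (forall t, 0 <= t <= b -> (forall s, 0 <= s <= t -> Rabs (g s) <= 2 * k) -> Rabs (g t) <= k) ->
  forall t, 0 <= t <= b -> Rabs (g t) <= k.
Proof.
  intros Hb Hk Hc Hg0 Hstep.
  set (E := fun t => 0 <= t <= b /\ forall s, 0 <= s <= t -> Rabs (g s) <= 2 * k).
  assert (E0 : E 0). { split; [lra|]. intros s Hs. replace s with 0 by lra. lra. }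
  assert (Eb : bound E) by (exists b; intros x [Hx _]; lra).
  destruct (completeness E Eb (ex_intro _ 0 E0)) as [tau [Hub Hlub]].
  assert (Ht0 : 0 <= tau) by (apply Hub; auto).
  assert (Htb : tau <= b) by (apply Hlub; intros x [Hx _]; lra).
  assert (Below : forall s, 0 <= s < tau -> Rabs (g s) <= 2 * k).
  { intros s Hs. apply NNPP. intros Hn.
    assert (is_upper_bound E s).
    { intros x [Hx Hx']. destruct (Rle_or_lt x s) as [|Hlt]; auto. exfalso. apply Hn. apply Hx'. lra. }
    specialize (Hlub s H). lra. }
  assert (Atau : Rabs (g tau) <= 2 * k).
  { destruct (Req_dec tau 0) as [->|Hne]. lra.
    apply Rnot_lt_le. intros Hlt.
    destruct (cont_eps_inv g tau (Hc tau ltac:(lra)) (Rabs (g tau) - 2 * k) ltac:(lra)) as [d [Hd Hd']].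
    set (s := Rmax 0 (tau - d / 2)).
    assert (0 <= s < tau) by (unfold s, Rmax; destruct Rle_dec; lra).
    assert (Rabs (s - tau) < d) by (unfold s, Rmax; destruct Rle_dec; apply Rabs_def1; lra).
    specialize (Hd' s H0). specialize (Below s H).
    pose proof (Rabs_triang_inv (g tau) (g s)). rewrite <- (Rabs_Ropp (g s - g tau)) in Hd'.
    replace (- (g s - g tau)) with (g tau - g s) in Hd' by ring. lra. }
  assert (Etau : forall s, 0 <= s <= tau -> Rabs (g s) <= k).
  { intros s Hs. apply Hstep. lra. intros u Hu.
    destruct (Req_dec u tau) as [->|]. auto. apply Below; lra. }
  assert (Htau : tau = b).
  { destruct (Req_dec tau b); auto. exfalso.
    assert (Hg : Rabs (g tau) <= k) by (apply Etau; lra).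
    destruct (cont_eps_inv g tau (Hc tau ltac:(lra)) k Hk) as [d [Hd Hd']].
    set (s := Rmin b (tau + d / 2)).
    assert (tau < s <= b) by (unfold s, Rmin; destruct Rle_dec; lra).
    assert (E s).
    { split; [lra|]. intros u Hu. destruct (Rle_or_lt u tau). pose proof (Etau u ltac:(lra)); lra.
      assert (Rabs (u - tau) < d) by (unfold s, Rmin in *; destruct Rle_dec; apply Rabs_def1; lra).
      specialize (Hd' u H2). pose proof (Rabs_triang_inv (g u) (g tau)). lra. }
    specialize (Hub s H1). lra. }
  intros t Ht. apply Etau. lra.
Qed.


Definition P1f (Z : pvf) m th rho := sum_f_R0 (fun j => rho ^ (m - j) * Afun Z j th) m.
Definition P2f (Z : pvf) m th rho := sum_f_R0 (fun j => rho ^ (m - j) * Rfun Z j th) m.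
Definition iS (m : nat) rho := (/ sqrt (1 + rho ^ 2)) ^ (m - 1).

Lemma PX_dec m Z th rho : PX m Z th rho = (P1f Z m th rho * iS m rho, - rho * P2f Z m th rho * iS m rho).
Proof.
  unfold PX, iS, P1f, P2f. rewrite pow_inv. f_equal.
  unfold Rdiv. f_equal.
  assert (E : sum_f_R0 (fun j => rho ^ (m + 1 - j) * Rfun Z j th) m = rho * sum_f_R0 (fun j => rho ^ (m - j) * Rfun Z j th) m).
  { rewrite scal_sum. apply sum_eq. intros i Hi.
    replace (m + 1 - i)%nat with (S (m - i)) by lia. simpl. ring. }
  rewrite E. ring.
Qed.

Lemma LB_ext f g : (forall a b, f a b = g a b) -> LB f -> LB g.
Proof. intros E [M [L [HM [HL H]]]]. exists M, L. split; [lra|split;[lra|]]. intros. rewrite <- !E. apply H. Qed.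

Lemma LB_hom c k : LB (fun a _ => hom c k (cos a) (sin a)).
Proof.
  unfold hom. apply (LB_sum (fun i a b => c i (k - i)%nat * cos a ^ i * sin a ^ (k - i))).
  intros i _. apply LB_mult. apply LB_mult. apply LB_const. apply (LB_pow (fun a _ => cos a)), LB_cos.
  apply (LB_pow (fun a _ => sin a)), LB_sin.
Qed.

Lemma LB_A Z j : LB (fun a _ => Afun Z j a).
Proof.
  unfold Afun. apply (LB_plus (fun a _ => hom (cQ Z) j (cos a) (sin a) * cos a) (fun a _ => - (hom (cP Z) j (cos a) (sin a) * sin a))).
  apply LB_mult. apply LB_hom. apply LB_cos.
  apply LB_opp. apply LB_mult. apply LB_hom. apply LB_sin.
Qed.

Lemma LB_R Z j : LB (fun a _ => Rfun Z j a).
Proof.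
  unfold Rfun. apply LB_plus.
  apply LB_mult. apply LB_hom. apply LB_cos.
  apply LB_mult. apply LB_hom. apply LB_sin.
Qed.

Lemma LB_P1c Z m d : 0 <= d -> LB (fun a b => P1f Z m a (clamp (-d) d b)).
Proof.
  intros Hd. unfold P1f. apply (LB_sum (fun j a b => clamp (-d) d b ^ (m - j) * Afun Z j a)).
  intros. apply LB_mult. apply (LB_pow (fun _ b => clamp (-d) d b)). apply LB_clampb; auto. apply LB_A.
Qed.

Lemma LB_P2c Z m d : 0 <= d -> LB (fun a b => P2f Z m a (clamp (-d) d b)).
Proof.
  intros Hd. unfold P2f. apply (LB_sum (fun j a b => clamp (-d) d b ^ (m - j) * Rfun Z j a)).
  intros. apply LB_mult. apply (LB_pow (fun _ b => clamp (-d) d b)). apply LB_clampb; auto. apply LB_R.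
Qed.

Lemma LB_iSc m d : 0 <= d -> LB (fun _ b => iS m (clamp (-d) d b)).
Proof. intros Hd. unfold iS. apply (LB_pow (fun _ b => / sqrt (1 + clamp (-d) d b ^ 2))). apply LB_invsq; auto. Qed.

Definition Ft1 m Z lo hi d a b := fst (PX m Z (clamp lo hi a) (clamp (-d) d b)).
Definition Ft2 m Z lo hi d a b := snd (PX m Z (clamp lo hi a) (clamp (-d) d b)).

Lemma LB_Ft1 m Z lo hi d : 0 <= d -> LB (Ft1 m Z lo hi d).
Proof.
  intros Hd. apply (LB_ext (fun a b => P1f Z m (clamp lo hi a) (clamp (-d) d b) * iS m (clamp (-d) d b))).
  intros; unfold Ft1; rewrite PX_dec; reflexivity.
  apply (LB_compa (fun a b => P1f Z m a (clamp (-d) d b) * iS m (clamp (-d) d b))).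
  apply LB_mult. apply LB_P1c; auto. apply LB_iSc; auto.
Qed.

Lemma LB_Ft2 m Z lo hi d : 0 <= d -> LB (Ft2 m Z lo hi d).
Proof.
  intros Hd. apply (LB_ext (fun a b => - clamp (-d) d b * P2f Z m (clamp lo hi a) (clamp (-d) d b) * iS m (clamp (-d) d b))).
  intros; unfold Ft2; rewrite PX_dec; reflexivity.
  apply (LB_compa (fun a b => - clamp (-d) d b * P2f Z m a (clamp (-d) d b) * iS m (clamp (-d) d b))).
  apply LB_mult. apply LB_mult. apply LB_opp. apply LB_clampb; auto. apply LB_P2c; auto. apply LB_iSc; auto.
Qed.

Lemma LB_cont1 f b x : LB f -> continuity_pt (fun a => f a b) x.
Proof.
  intros H. apply (LB_cont f (fun a => a) (fun _ => b) x H).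
  apply derivable_continuous_pt, derivable_pt_id. apply continuity_pt_const; intros ? ?; reflexivity.
Qed.

Lemma P1f_0 Z m th : P1f Z m th 0 = Afun Z m th.
Proof.
  unfold P1f. destruct m as [|m]. simpl. ring.
  rewrite tech5. rewrite Nat.sub_diag. simpl pow at 2.
  rewrite (sum_eq _ (fun _ => 0)). rewrite sum_cte. ring.
  intros i Hi. replace (S m - i)%nat with (S (m - i)) by lia. simpl. ring.
Qed.

Lemma P2f_0 Z m th : P2f Z m th 0 = Rfun Z m th.
Proof.
  unfold P2f. destruct m as [|m]. simpl. ring.
  rewrite tech5. rewrite Nat.sub_diag. simpl pow at 2.
  rewrite (sum_eq _ (fun _ => 0)). rewrite sum_cte. ring.
  intros i Hi. replace (S m - i)%nat with (S (m - i)) by lia. simpl. ring.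
Qed.

Lemma iS_0 m : iS m 0 = 1.
Proof. unfold iS. replace (1 + 0 ^ 2) with 1 by ring. rewrite sqrt_1, Rinv_1, pow1. reflexivity. Qed.

Lemma PX_0 m Z th : PX m Z th 0 = (Afun Z m th, 0).
Proof. rewrite PX_dec, P1f_0, iS_0. f_equal; ring. Qed.


Lemma exp_deriv_lin k t : derivable_pt_lim (fun t => exp (k * t)) t (exp (k * t) * k).
Proof.
  assert (Hx := derivable_pt_lim_comp (fun t => k * t) exp t (k * 1) _
      (derivable_pt_lim_scal _ _ _ _ (derivable_pt_lim_id t)) (derivable_pt_lim_exp (k * t))).
  eapply derivable_pt_lim_ext; [|replace (exp (k * t) * k) with (exp (k * t) * (k * 1)) by ring; exact Hx].
  intros; reflexivity.
Qed.

Lemma sq1_deriv u u' t : derivable_pt_lim u t u' -> derivable_pt_lim (fun t => u t ^ 2) t (2 * u t * u').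
Proof.
  intros H. assert (H2 := sq_deriv u (fun _ => 0) u' 0 t H (derivable_pt_lim_const 0 t)).
  eapply derivable_pt_lim_ext; [|replace (2 * u t * u') with (2 * (u t - 0) * (u' - 0)) by ring; exact H2].
  intros; simpl; ring.
Qed.

Lemma sq_bounds rh d K r0 T : 0 <= K -> rh 0 = r0 ->
  (forall t, 0 <= t <= T -> derivable_pt_lim rh t (d t) /\ Rabs (d t) <= K * Rabs (rh t)) ->
  forall t, 0 <= t <= T -> rh t ^ 2 <= r0 ^ 2 * exp (2 * K * t) /\ r0 ^ 2 * exp (- (2 * K) * t) <= rh t ^ 2.
Proof.
  intros HK H0 Hd t Ht.
  assert (Hp : forall t, 0 <= t <= T -> Rabs (rh t * d t) <= K * rh t ^ 2).
  { intros u Hu. destruct (Hd u Hu) as [_ B]. rewrite Rabs_mult.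
    replace (rh u ^ 2) with (Rabs (rh u) * Rabs (rh u)).
    pose proof (Rabs_pos (rh u)). nra. rewrite <- Rabs_mult. simpl. rewrite Rmult_1_r. apply Rabs_right. nra. }
  split.
  - assert (M := mono_le (fun t => rh t ^ 2 * exp (- (2 * K) * t))
      (fun t => 2 * rh t * d t * exp (- (2 * K) * t) + rh t ^ 2 * (exp (- (2 * K) * t) * - (2 * K))) 0 t ltac:(lra)).
    assert (M' : rh t ^ 2 * exp (- (2 * K) * t) <= rh 0 ^ 2 * exp (- (2 * K) * 0)).
    { apply M. intros u Hu. apply (derivable_pt_lim_mult (fun t => rh t ^ 2) (fun t => exp (- (2 * K) * t))).
      apply sq1_deriv. apply Hd; lra. apply exp_deriv_lin.
      intros u Hu. pose proof (exp_pos (- (2 * K) * u)). specialize (Hp u ltac:(lra)).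
      pose proof (Rle_abs (rh u * d u)). assert (0 <= rh u ^2) by nra. nra. }
    rewrite H0 in M'. replace (- (2 * K) * 0) with 0 in M' by ring. rewrite exp_0 in M'.
    pose proof (exp_pos (2 * K * t)).
    replace (rh t ^ 2) with (rh t ^ 2 * exp (- (2 * K) * t) * exp (2 * K * t)).
    apply Rmult_le_compat_r; lra.
    rewrite Rmult_assoc, <- exp_plus. replace (- (2 * K) * t + 2 * K * t) with 0 by ring. rewrite exp_0; ring.
  - assert (M := mono_ge (fun t => rh t ^ 2 * exp (2 * K * t))
      (fun t => 2 * rh t * d t * exp (2 * K * t) + rh t ^ 2 * (exp (2 * K * t) * (2 * K))) 0 t ltac:(lra)).
    assert (M' : rh 0 ^ 2 * exp (2 * K * 0) <= rh t ^ 2 * exp (2 * K * t)).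
    { apply M. intros u Hu. apply (derivable_pt_lim_mult (fun t => rh t ^ 2) (fun t => exp (2 * K * t))).
      apply sq1_deriv. apply Hd; lra. apply exp_deriv_lin.
      intros u Hu. pose proof (exp_pos (2 * K * u)). specialize (Hp u ltac:(lra)).
      pose proof (Rle_abs (- (rh u * d u))) as Hab. rewrite Rabs_Ropp in Hab. assert (0 <= rh u ^2) by nra. nra. }
    rewrite H0 in M'. replace (2 * K * 0) with 0 in M' by ring. rewrite exp_0 in M'.
    pose proof (exp_pos (- (2 * K) * t)).
    replace (rh t ^ 2) with (rh t ^ 2 * exp (2 * K * t) * exp (- (2 * K) * t)).
    apply Rmult_le_compat_r; lra.
    rewrite Rmult_assoc, <- exp_plus. replace (2 * K * t + - (2 * K) * t) with 0 by ring. rewrite exp_0; ring.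
Qed.

Lemma lin_lower f d a T : (forall t, 0 <= t <= T -> derivable_pt_lim f t (d t) /\ a <= d t) ->
  forall t1 t2, 0 <= t1 <= t2 -> t2 <= T -> a * (t2 - t1) <= f t2 - f t1.
Proof.
  intros H t1 t2 H1 H2.
  assert (M := mono_ge (fun t => f t - a * t) (fun t => d t - a) t1 t2 ltac:(lra)).
  assert (f t1 - a * t1 <= f t2 - a * t2).
  { apply M. intros u Hu. apply derivable_pt_lim_minus. apply H; lra.
    replace a with (a * 1) at 2 by ring. apply derivable_pt_lim_scal, derivable_pt_lim_id.
    intros u Hu. destruct (H u ltac:(lra)). lra. }
  lra.
Qed.

Lemma pos_keep (rh : R -> R) T : (forall t, continuity_pt rh t) -> 0 < rh 0 ->
  (forall t, 0 <= t <= T -> rh t <> 0) -> forall t, 0 <= t <= T -> 0 < rh t.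
Proof.
  intros Hc H0 Hn t Ht. destruct (Rlt_or_le 0 (rh t)) as [|Hle]; auto. exfalso.
  destruct (IVT_cor rh 0 t Hc ltac:(lra)) as [z [Hz Hz']]. nra.
  apply (Hn z); auto. lra.
Qed.


Lemma s_cases s : (s = 1 \/ s = -1) -> s * s = 1 /\ Rabs s = 1.
Proof. intros [->| ->]; split; try ring; [apply Rabs_R1| rewrite Rabs_left; lra]. Qed.

Lemma in_iff al s x : (s = 1 \/ s = -1) ->
  (Rmin al (al + s * PI) <= x <= Rmax al (al + s * PI) <-> 0 <= s * (x - al) <= PI).
Proof.
  intros Hs. pose proof PI_RGT_0. destruct Hs as [-> | ->].
  - rewrite Rmin_left, Rmax_right by lra. split; intros; lra.
  - rewrite Rmin_right, Rmax_left by lra. split; intros; lra.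
Qed.

Lemma in_iff_strict al s x : (s = 1 \/ s = -1) ->
  (Rmin al (al + s * PI) < x < Rmax al (al + s * PI) <-> 0 < s * (x - al) < PI).
Proof.
  intros Hs. pose proof PI_RGT_0. destruct Hs as [-> | ->].
  - rewrite Rmin_left, Rmax_right by lra. split; intros; lra.
  - rewrite Rmin_right, Rmax_left by lra. split; intros; lra.
Qed.

Lemma iS_pos m rho : 0 < iS m rho.
Proof. unfold iS. apply pow_lt. apply invsq_bound. Qed.

Lemma lip_at0 (f : R -> R -> R) L a rho : (forall a b a' b', Rabs (f a b - f a' b') <= L * (Rabs (a - a') + Rabs (b - b'))) ->
  Rabs (f a rho - f a 0) <= L * Rabs rho.
Proof. intros H. eapply Rle_trans. apply H. unfold Rminus at 1. rewrite Rplus_opp_r, Rabs_R0, Rplus_0_l, Rminus_0_r. lra. Qed.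

Lemma clamp1 rho : Rabs rho <= 1 -> clamp (-1) 1 rho = rho.
Proof. intros H. apply clamp_id. pose proof (Rle_abs rho). pose proof (Rle_abs (-rho)). rewrite Rabs_Ropp in *. lra. Qed.

Lemma leg m Z al s c Phi g :
  (s = 1 \/ s = -1) -> 0 < c ->
  (forall th, 0 <= s * (th - al) <= PI -> 2 * c <= s * Afun Z m th) ->
  (forall x, derivable_pt_lim Phi x (g x)) ->
  (forall th, 0 <= s * (th - al) <= PI -> g th = Rfun Z m th / Afun Z m th) ->
  exists del E C, 0 < del /\ 0 < E /\ 0 <= C /\ forall r0, 0 <= r0 < del -> exists r1,
    arc (PX m Z) al (al + s * PI) r0 r1 /\
    (forall r1', arc (PX m Z) al (al + s * PI) r0 r1' -> r1' = r1) /\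
    0 <= r1 <= E * r0 /\
    (0 < r0 -> 0 < r1 /\ Rabs (ln r1 - ln r0 + (Phi (al + s * PI) - Phi al)) <= C * r0).
Proof.
  intros Hs Hc HA HPhi Hg.
  destruct (s_cases s Hs) as [Hss Has].
  pose proof PI_RGT_0 as HPI.
  set (be := al + s * PI). set (lo := Rmin al be). set (hi := Rmax al be).
  assert (Hlh : lo <= hi) by (unfold lo, hi; apply Rle_trans with al; [apply Rmin_l|apply Rmax_l]).
  assert (Hin : forall x, lo <= x <= hi <-> 0 <= s * (x - al) <= PI) by (intros; apply in_iff; auto).
  destruct (LB_lip (fun a b => P1f Z m a (clamp (-1) 1 b) - Afun Z m a)) as [L1 [HL1 HP1]].
  { apply LB_plus. apply LB_P1c; lra. apply LB_opp, LB_A. }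
  destruct (LB_lip (fun a b => iS m (clamp (-1) 1 b))) as [L2 [HL2 HiS]].
  { apply LB_iSc; lra. }
  destruct (LB_lip (fun a b => Rfun Z m a * P1f Z m a (clamp (-1) 1 b) - Afun Z m a * P2f Z m a (clamp (-1) 1 b))) as [LQ [HLQ HQ]].
  { apply LB_plus. apply LB_mult. apply LB_R. apply LB_P1c; lra. apply LB_opp. apply LB_mult. apply LB_A. apply LB_P2c; lra. }
  assert (c10 : clamp (-1) 1 0 = 0) by (apply clamp_id; lra).
  assert (P1b : forall a rho, Rabs rho <= 1 -> Rabs (P1f Z m a rho - Afun Z m a) <= L1 * Rabs rho).
  { intros a rho Hr. pose proof (lip_at0 _ L1 a rho HP1) as H. simpl in H.
    rewrite c10, P1f_0, clamp1 in H by auto. replace (Afun Z m a - Afun Z m a) with 0 in H by ring. rewrite Rminus_0_r in H. exact H. }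
  assert (iSb : forall rho, Rabs rho <= 1 -> Rabs (iS m rho - 1) <= L2 * Rabs rho).
  { intros rho Hr. pose proof (lip_at0 _ L2 0 rho HiS) as H. simpl in H.
    rewrite c10, iS_0, clamp1 in H by auto. exact H. }
  assert (Qb : forall a rho, Rabs rho <= 1 -> Rabs (Rfun Z m a * P1f Z m a rho - Afun Z m a * P2f Z m a rho) <= LQ * Rabs rho).
  { intros a rho Hr. pose proof (lip_at0 _ LQ a rho HQ) as H. simpl in H.
    rewrite c10, P1f_0, P2f_0, clamp1 in H by auto.
    replace (Rfun Z m a * Afun Z m a - Afun Z m a * Rfun Z m a) with 0 in H by ring. rewrite Rminus_0_r in H. exact H. }
  set (d1 := Rmin 1 (Rmin (c / L1) (/ (2 * L2)))).
  assert (Hd1 : 0 < d1) by (unfold d1; repeat apply Rmin_pos; try lra; [apply Rdiv_lt_0_compat| apply Rinv_0_lt_compat]; lra).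
  assert (Hd11 : d1 <= 1) by apply Rmin_l.
  assert (Hd1c : L1 * d1 <= c).
  { assert (d1 <= c / L1) by (eapply Rle_trans; [apply Rmin_r| apply Rmin_l]).
    apply (Rmult_le_compat_l L1) in H; [|lra]. replace (L1 * (c / L1)) with c in H by (field; lra). exact H. }
  assert (Hd1L : L2 * d1 <= / 2).
  { assert (d1 <= / (2 * L2)) by (eapply Rle_trans; [apply Rmin_r| apply Rmin_r]).
    apply (Rmult_le_compat_l L2) in H; [|lra]. replace (L2 * / (2 * L2)) with (/ 2) in H by (field; lra). exact H. }
  assert (P1pos : forall a rho, 0 <= s * (a - al) <= PI -> Rabs rho <= d1 -> c <= s * P1f Z m a rho).
  { intros a rho Ha Hr. specialize (HA a Ha). specialize (P1b a rho ltac:(lra)).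
    assert (Rabs (s * (P1f Z m a rho - Afun Z m a)) <= c) by (rewrite Rabs_mult, Has; nra).
    pose proof (Rle_abs (- (s * (P1f Z m a rho - Afun Z m a)))). rewrite Rabs_Ropp in H0. nra. }
  assert (iSpos : forall rho, Rabs rho <= d1 -> / 2 <= iS m rho).
  { intros rho Hr. specialize (iSb rho ltac:(lra)).
    pose proof (Rle_abs (- (iS m rho - 1))). rewrite Rabs_Ropp in H. nra. }
  destruct (LB_bound (fun a b => P2f Z m a (clamp (-d1) d1 b) * iS m (clamp (-d1) d1 b))) as [K [HK HKb]].
  { apply LB_mult. apply LB_P2c; lra. apply LB_iSc; lra. }
  set (T0 := 2 * PI / c). assert (HT0 : 0 < T0) by (unfold T0; apply Rdiv_lt_0_compat; lra).
  set (E := exp (K * T0)). assert (HE : 1 <= E).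
  { unfold E. rewrite <- exp_0. destruct (Req_dec (K * T0) 0) as [->|]; [lra|]. left. apply exp_increasing. nra. }
  set (C := LQ * E * PI / (2 * c ^ 2)).
  exists (d1 / (2 * E)), E, C. split; [apply Rdiv_lt_0_compat; lra|]. split; [lra|]. split.
  { unfold C. apply Rlt_le, Rdiv_lt_0_compat. apply Rmult_lt_0_compat; [apply Rmult_lt_0_compat|]; lra. pose proof (pow_lt c 2 Hc). lra. }
  intros r0 Hr0.
  assert (Hr0E : r0 * E < d1 / 2).
  { destruct Hr0 as [_ Hr0]. apply (Rmult_lt_compat_r E) in Hr0; [|lra].
    replace (d1 / (2 * E) * E) with (d1 / 2) in Hr0 by (field; lra). exact Hr0. }
  destruct (picard (Ft1 m Z lo hi d1) (Ft2 m Z lo hi d1) al r0 (LB_Ft1 m Z lo hi d1 ltac:(lra)) (LB_Ft2 m Z lo hi d1 ltac:(lra)))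
    as [th [rh [Hth0 [Hrh0 Hsol]]]].
  assert (Hcth : forall t, continuity_pt th t) by (intros; eapply dlim_cont; apply Hsol).
  assert (Hcrh : forall t, continuity_pt rh t) by (intros; eapply dlim_cont; apply Hsol).
  assert (Fth : forall t, c / 2 <= s * Ft1 m Z lo hi d1 (th t) (rh t)).
  { intros t. unfold Ft1. rewrite PX_dec. simpl.
    assert (Ha : 0 <= s * (clamp lo hi (th t) - al) <= PI) by (apply Hin, clamp_in; auto).
    assert (Hr : Rabs (clamp (-d1) d1 (rh t)) <= d1).
    { pose proof (clamp_in (-d1) d1 (rh t) ltac:(lra)). apply Rabs_le; lra. }
    specialize (P1pos _ _ Ha Hr). specialize (iSpos _ Hr).
    rewrite <- Rmult_assoc. nra. }
  assert (Frh : forall t, Rabs (Ft2 m Z lo hi d1 (th t) (rh t)) <= K * Rabs (rh t)).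
  { intros t. unfold Ft2. rewrite PX_dec. simpl.
    replace (- clamp (-d1) d1 (rh t) * P2f Z m (clamp lo hi (th t)) (clamp (-d1) d1 (rh t)) * iS m (clamp (-d1) d1 (rh t)))
      with (- clamp (-d1) d1 (rh t) * (P2f Z m (clamp lo hi (th t)) (clamp (-d1) d1 (rh t)) * iS m (clamp (-d1) d1 (rh t)))) by ring.
    rewrite Rabs_mult, Rabs_Ropp. specialize (HKb (clamp lo hi (th t)) (rh t)).
    pose proof (clamp_abs d1 (rh t) ltac:(lra)). pose proof (Rabs_pos (clamp (-d1) d1 (rh t))).
    pose proof (Rabs_pos (rh t)). nra. }
  assert (SQ := sq_bounds rh (fun t => Ft2 m Z lo hi d1 (th t) (rh t)) K r0 T0 HK Hrh0
                 ltac:(intros t _; split; [apply Hsol| apply Frh])).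
  assert (RB : forall t, 0 <= t <= T0 -> Rabs (rh t) <= r0 * E).
  { intros t Ht. destruct (SQ t Ht) as [A _].
    assert (exp (2 * K * t) <= E ^ 2).
    { unfold E. simpl. rewrite Rmult_1_r, <- exp_plus. destruct (Req_dec (2 * K * t) (K * T0 + K * T0)) as [->|]; [lra|].
      left; apply exp_increasing. nra. }
    assert (Rabs (rh t) ^ 2 = rh t ^ 2) by (simpl; rewrite !Rmult_1_r, <- Rabs_mult; apply Rabs_right; nra).
    assert (0 <= r0 * E) by nra. pose proof (Rabs_pos (rh t)).
    assert (rh t ^ 2 <= (r0 * E) ^ 2) by (pose proof (pow2_ge_0 r0); nra).
    nra. }
  assert (LIN := lin_lower (fun t => s * th t) (fun t => s * Ft1 m Z lo hi d1 (th t) (rh t)) (c / 2) T0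
            ltac:(intros t _; split; [apply derivable_pt_lim_scal, Hsol| apply Fth])).
  simpl in LIN.
  assert (Hcont_h : continuity (fun t => s * (th t - al) - PI)).
  { intros t. apply continuity_pt_minus. apply continuity_pt_scal. apply continuity_pt_minus. auto.
    apply continuity_pt_const; intros ? ?; reflexivity. apply continuity_pt_const; intros ? ?; reflexivity. }
  assert (hT0 : 0 <= s * (th T0 - al) - PI).
  { specialize (LIN 0 T0 ltac:(lra) ltac:(lra)). rewrite Hth0 in LIN.
    replace (c / 2 * (T0 - 0)) with PI in LIN by (unfold T0; field; lra). lra. }
  destruct (IVT_cor _ 0 T0 Hcont_h ltac:(lra)) as [T [HT HhT]].
  { simpl. rewrite Hth0. replace (s * (al - al) - PI) with (- PI) by ring. nra. }
  assert (HTpos : 0 < T).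
  { destruct (Req_dec T 0) as [->|]. rewrite Hth0 in HhT. nra. lra. }
  assert (HthT : th T = be).
  { unfold be. assert (s * (th T - al) = PI) by lra.
    replace (th T) with (al + s * (s * (th T - al))) by (rewrite <- Rmult_assoc, Hss; ring). rewrite H. ring. }
  assert (Int : forall t, 0 < t < T -> 0 < s * (th t - al) < PI).
  { intros t Ht. split.
    - specialize (LIN 0 t ltac:(lra) ltac:(lra)). rewrite Hth0 in LIN. nra.
    - specialize (LIN t T ltac:(lra) ltac:(lra)). nra. }
  assert (Clo : forall t, 0 <= t <= T -> 0 <= s * (th t - al) <= PI).
  { intros t Ht. destruct (Req_dec t 0) as [->|]. rewrite Hth0. replace (s * (al - al)) with 0 by ring. lra.
    destruct (Req_dec t T) as [->|]. lra. pose proof (Int t ltac:(lra)). lra. }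
  assert (CLth : forall t, 0 <= t <= T -> clamp lo hi (th t) = th t).
  { intros t Ht. apply clamp_id. apply Hin. auto. }
  assert (CLrh : forall t, 0 <= t <= T -> clamp (-d1) d1 (rh t) = rh t).
  { intros t Ht. apply clamp_id. specialize (RB t ltac:(lra)).
    pose proof (Rle_abs (rh t)). pose proof (Rle_abs (- rh t)). rewrite Rabs_Ropp in *. lra. }
  assert (SOL : is_sol (PX m Z) th rh T).
  { intros t Ht. destruct (Hsol t) as [A B]. unfold Ft1, Ft2 in A, B. rewrite CLth, CLrh in A, B by auto. auto. }
  assert (ARC : arc (PX m Z) al be r0 (rh T)).
  { exists T, th, rh. split; auto. split; auto. split; auto. split; auto. split; auto. split; auto.
    intros t Ht. apply in_iff_strict; auto. }
  assert (POS : 0 < r0 -> forall t, 0 <= t <= T -> 0 < rh t).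
  { intros Hr t Ht. apply (pos_keep rh T); auto. lra.
    intros u Hu Hz. destruct (SQ u ltac:(lra)) as [_ B]. rewrite Hz in B.
    pose proof (exp_pos (- (2 * K) * u)). assert (0 < r0 ^ 2) by (apply pow_lt; lra). simpl in B. nra. }
  assert (BND : 0 <= rh T <= E * r0).
  { pose proof (RB T ltac:(lra)) as HRT. destruct (Rle_lt_or_eq_dec 0 r0 (proj1 Hr0)) as [Hr|Hr].
    - pose proof (POS Hr T ltac:(lra)) as HP. rewrite Rabs_right in HRT by lra. lra.
    - rewrite <- Hr in HRT |- *. rewrite Rmult_0_l in HRT. pose proof (Rabs_pos (rh T)). assert (HZ : Rabs (rh T) = 0) by lra.
      apply Rabs_eq_0 in HZ. rewrite HZ. lra. }
  assert (LN : 0 < r0 -> Rabs (ln (rh T) - ln r0 + (Phi be - Phi al)) <= C * r0).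
  { intros Hr. set (ka := LQ * (r0 * E) / (2 * c ^ 2)).
    assert (Hka : 0 <= ka) by (unfold ka; apply Rlt_le, Rdiv_lt_0_compat; [apply Rmult_lt_0_compat; [lra| apply Rmult_lt_0_compat; lra]| pose proof (pow_lt c 2 Hc); lra]).
    set (Lf := fun t => ln (rh t) + Phi (th t)).
    set (Lf' := fun t => / rh t * Ft2 m Z lo hi d1 (th t) (rh t) + g (th t) * Ft1 m Z lo hi d1 (th t) (rh t)).
    assert (DL : forall t, 0 <= t <= T -> derivable_pt_lim Lf t (Lf' t)).
    { intros t Ht. unfold Lf, Lf'. apply (derivable_pt_lim_plus (fun t => ln (rh t)) (fun t => Phi (th t))).
      - assert (H := derivable_pt_lim_comp rh ln t _ _ (proj2 (Hsol t)) (derivable_pt_lim_ln (rh t) (POS Hr t Ht))).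
        eapply derivable_pt_lim_ext; [|exact H]. intros; reflexivity.
      - assert (H := derivable_pt_lim_comp th Phi t _ _ (proj1 (Hsol t)) (HPhi (th t))).
        eapply derivable_pt_lim_ext; [|exact H]. intros; reflexivity. }
    assert (BL : forall t, 0 <= t <= T -> Rabs (Lf' t) <= ka * (s * Ft1 m Z lo hi d1 (th t) (rh t))).
    { intros t Ht. unfold Lf'. unfold Ft1, Ft2. rewrite CLth, CLrh by auto. rewrite PX_dec. simpl.
      specialize (Clo t Ht). rewrite (Hg (th t) Clo).
      pose proof (POS Hr t Ht) as Hp. pose proof (RB t ltac:(lra)) as Hrb.
      assert (HAa := HA (th t) Clo).
      assert (HAn : Afun Z m (th t) <> 0) by (intro Hz; rewrite Hz in HAa; lra).
      set (A := Afun Z m (th t)) in *. set (Rr := Rfun Z m (th t)).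
      set (p1 := P1f Z m (th t) (rh t)). set (p2 := P2f Z m (th t) (rh t)). set (i := iS m (rh t)).
      set (rho := rh t) in *.
      replace (/ rho * (- rho * p2 * i) + Rr / A * (p1 * i)) with (i * (Rr * p1 - A * p2) / A) by (field; lra).
      assert (HQ' : Rabs (Rr * p1 - A * p2) <= LQ * Rabs rho) by (apply Qb; lra).
      assert (Hrho1 : Rabs rho <= d1) by lra.
      assert (Hsp : c <= s * p1) by (apply P1pos; auto).
      assert (Hi : 0 < i) by apply iS_pos.
      assert (HAabs : 2 * c <= Rabs A) by (rewrite <- Rmult_1_l, <- Has, <- Rabs_mult; eapply Rle_trans; [apply HAa| apply Rle_abs]).
      unfold Rdiv. rewrite !Rabs_mult, Rabs_inv. rewrite (Rabs_right i) by lra.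
      assert (/ Rabs A <= / (2 * c)) by (apply Rinv_le_contravar; lra).
      assert (0 < / Rabs A) by (apply Rinv_0_lt_compat; lra).
      pose proof (Rabs_pos (Rr * p1 - A * p2)).
      assert (Rabs (Rr * p1 - A * p2) <= LQ * (r0 * E)) by nra.
      assert (i * Rabs (Rr * p1 - A * p2) * / Rabs A <= i * (LQ * (r0 * E)) * / (2 * c)).
      { apply Rmult_le_compat; try nra; apply Rmult_le_compat_l; lra. }
      assert (i * c <= s * (p1 * i)) by nra.
      unfold ka. replace (LQ * (r0 * E) / (2 * c ^ 2) * (s * (p1 * i))) with ((LQ * (r0 * E) / (2 * c)) * (s * (p1 * i) / c)) by (field; lra).
      apply Rle_trans with (i * (LQ * (r0 * E)) * / (2 * c)); auto.
      replace (i * (LQ * (r0 * E)) * / (2 * c)) with ((LQ * (r0 * E) / (2 * c)) * (i * c / c)) by (field; lra).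
      apply Rmult_le_compat_l. apply Rlt_le, Rdiv_lt_0_compat; [apply Rmult_lt_0_compat; [lra| apply Rmult_lt_0_compat; lra]| lra].
      unfold Rdiv. apply Rmult_le_compat_r. left; apply Rinv_0_lt_compat; lra. lra. }
    assert (D1 : forall t, 0 <= t <= T -> derivable_pt_lim (fun t => s * th t) t (s * Ft1 m Z lo hi d1 (th t) (rh t))).
    { intros; apply derivable_pt_lim_scal, Hsol. }
    assert (U1 := mono_le (fun t => Lf t - ka * (s * th t)) (fun t => Lf' t - ka * (s * Ft1 m Z lo hi d1 (th t) (rh t))) 0 T ltac:(lra)).
    assert (U2 := mono_ge (fun t => Lf t + ka * (s * th t)) (fun t => Lf' t + ka * (s * Ft1 m Z lo hi d1 (th t) (rh t))) 0 T ltac:(lra)).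
    simpl in U1, U2.
    assert (A1 : Lf T - ka * (s * th T) <= Lf 0 - ka * (s * th 0)).
    { apply U1. intros t Ht. apply derivable_pt_lim_minus. auto.
      apply (derivable_pt_lim_scal (fun t => s * th t)). auto.
      intros t Ht. specialize (BL t Ht). pose proof (Rle_abs (Lf' t)). lra. }
    assert (A2 : Lf 0 + ka * (s * th 0) <= Lf T + ka * (s * th T)).
    { apply U2. intros t Ht. apply derivable_pt_lim_plus. auto.
      apply (derivable_pt_lim_scal (fun t => s * th t)). auto.
      intros t Ht. specialize (BL t Ht). pose proof (Rle_abs (- Lf' t)). rewrite Rabs_Ropp in H. lra. }
    unfold Lf in A1, A2. rewrite HthT, Hth0, Hrh0 in A1, A2.
    assert (Es : s * be - s * al = PI) by (unfold be; rewrite Rmult_plus_distr_l, <- Rmult_assoc, Hss; ring).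
    assert (ka * PI = C * r0) by (unfold ka, C; field; lra).
    apply Rabs_le. split; nra. }
  exists (rh T). split; [exact ARC|]. split; [|split; [exact BND| intros Hr; split; [apply POS; lra| apply LN; auto]]].
  intros r1' [T' [th2 [rh2 [HT' [S2 [E1 [E2 [E3 [E4 Hint2]]]]]]]]].
  assert (Rng2 : forall t, 0 <= t <= T' -> 0 <= s * (th2 t - al) <= PI).
  { intros t Ht. destruct (Req_dec t 0) as [->|]. rewrite E1. replace (s * (al - al)) with 0 by ring. lra.
    destruct (Req_dec t T') as [->|]. rewrite E3. unfold be. replace (s * (al + s * PI - al)) with ((s * s) * PI) by ring. rewrite Hss. lra.
    assert (0 < s * (th2 t - al) < PI) by (apply in_iff_strict; auto; apply Hint2; lra). lra. }
  assert (CL2 : forall t, 0 <= t <= T' -> clamp lo hi (th2 t) = th2 t).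
  { intros t Ht. apply clamp_id. apply Hin. auto. }
  set (Tm := Rmin T T').
  assert (HTm : 0 <= Tm <= T /\ Tm <= T') by (unfold Tm, Rmin; destruct Rle_dec; lra).
  assert (SOL1 : forall t, 0 <= t <= Tm -> derivable_pt_lim th t (Ft1 m Z lo hi d1 (th t) (rh t)) /\ derivable_pt_lim rh t (Ft2 m Z lo hi d1 (th t) (rh t))).
  { intros; apply Hsol. }
  assert (UPTO : forall t, 0 <= t <= Tm -> (forall u, 0 <= u <= t -> Rabs (rh2 u) <= d1) ->
            forall u, 0 <= u <= t -> th2 u = th u /\ rh2 u = rh u).
  { intros t Ht Hb. intros u Hu.
    assert (U := uniq2 (Ft1 m Z lo hi d1) (Ft2 m Z lo hi d1) t th2 rh2 th rh
        (LB_Ft1 m Z lo hi d1 ltac:(lra)) (LB_Ft2 m Z lo hi d1 ltac:(lra)) ltac:(lra)).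
    assert (A1 : forall v, 0 <= v <= t -> derivable_pt_lim th2 v (Ft1 m Z lo hi d1 (th2 v) (rh2 v)) /\ derivable_pt_lim rh2 v (Ft2 m Z lo hi d1 (th2 v) (rh2 v))).
    { intros v Hv. destruct (S2 v ltac:(lra)) as [A B]. unfold Ft1, Ft2.
      rewrite CL2 by lra. rewrite (clamp_id (-d1) d1 (rh2 v)). auto.
      specialize (Hb v Hv). pose proof (Rle_abs (rh2 v)). pose proof (Rle_abs (- rh2 v)). rewrite Rabs_Ropp in *. lra. }
    assert (A2 : forall v, 0 <= v <= t -> derivable_pt_lim th v (Ft1 m Z lo hi d1 (th v) (rh v)) /\ derivable_pt_lim rh v (Ft2 m Z lo hi d1 (th v) (rh v))).
    { intros v Hv. apply Hsol. }
    exact (U A1 A2 ltac:(congruence) ltac:(congruence) u Hu). }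
  assert (SMALL : forall t, 0 <= t <= Tm -> Rabs (rh2 t) <= d1 / 2).
  { apply (cont_ind rh2 Tm (d1 / 2)); try lra.
    - intros t Ht. eapply dlim_cont. apply (S2 t). lra.
    - rewrite E2. rewrite Rabs_right by lra. nra.
    - intros t Ht Hb. replace (2 * (d1 / 2)) with d1 in Hb by field.
      destruct (UPTO t Ht Hb t ltac:(lra)) as [_ ->]. specialize (RB t ltac:(lra)). lra. }
  assert (EQ : forall u, 0 <= u <= Tm -> th2 u = th u /\ rh2 u = rh u).
  { apply (UPTO Tm); try lra. intros u Hu. specialize (SMALL u Hu). lra. }
  destruct (Rtotal_order T T') as [Hlt|[Heq|Hgt]].
  - exfalso. assert (Tm = T) by (unfold Tm; apply Rmin_left; lra).
    destruct (EQ T ltac:(lra)) as [A _]. rewrite HthT in A.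
    assert (0 < s * (th2 T - al) < PI) by (apply in_iff_strict; auto; apply Hint2; lra).
    rewrite A in H0. unfold be in H0. replace (s * (al + s * PI - al)) with ((s * s) * PI) in H0 by ring. rewrite Hss in H0. lra.
  - subst T'. assert (Tm = T) by (unfold Tm; apply Rmin_left; lra).
    destruct (EQ T ltac:(lra)) as [_ B]. rewrite <- E4, B. reflexivity.
  - exfalso. assert (Tm = T') by (unfold Tm; apply Rmin_right; lra).
    destruct (EQ T' ltac:(lra)) as [A _]. rewrite E3 in A.
    assert (0 < s * (th T' - al) < PI) by (apply Int; lra).
    rewrite <- A in H0. unfold be in H0. replace (s * (al + s * PI - al)) with ((s * s) * PI) in H0 by ring. rewrite Hss in H0. lra.
Qed.


Definition is_pm (RR : R -> R -> Prop) (delta : R) (Pi : R -> R) : Prop :=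
  0 < delta /\ (forall r0, 0 <= r0 < delta -> RR r0 (Pi r0)) /\
  (forall r0 r1, 0 <= r0 < delta -> RR r0 r1 -> r1 = Pi r0).

Definition attr (RR : R -> R -> Prop) := exists delta, delta > 0 /\ forall r0, 0 < r0 < delta ->
    exists u : nat -> R, u 0%nat = r0 /\ (forall n, RR (u n) (u (S n))) /\ Un_cv u 0.
Definition rep (RR : R -> R -> Prop) := exists delta, delta > 0 /\ forall r0, 0 < r0 < delta ->
    exists u : nat -> R, u 0%nat = r0 /\ (forall n, RR (u (S n)) (u n)) /\ Un_cv u 0.

Lemma pow_le1 q n : 0 <= q <= 1 -> q ^ n <= 1.
Proof. intros H. rewrite <- (pow1 n). apply pow_incr. lra. Qed.

Lemma exp_ln_diff a b : 0 < a -> 0 < b -> exp (ln a - ln b) = a / b.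
Proof. intros. unfold Rminus. rewrite exp_plus, <- ln_Rinv, !exp_ln; auto. apply Rinv_0_lt_compat; auto. Qed.

Lemma rderiv_unique f g l1 l2 eta : eta > 0 -> (forall h, 0 <= h < eta -> f h = g h) ->
  rderiv_at f 0 l1 -> rderiv_at g 0 l2 -> l1 = l2.
Proof.
  intros He Hfg H1 H2. apply NNPP; intros Hne.
  set (e := Rabs (l1 - l2) / 2). assert (He' : e > 0) by (unfold e; apply Rdiv_lt_0_compat; [apply Rabs_pos_lt; lra| lra]).
  destruct (H1 e He') as [e1 [He1 A]]. destruct (H2 e He') as [e2 [He2 B]].
  set (h := Rmin eta (Rmin e1 e2) / 2).
  assert (Hh : 0 < h < Rmin eta (Rmin e1 e2)) by (unfold h; split; [apply Rdiv_lt_0_compat; [repeat apply Rmin_pos; lra| lra]| pose proof (Rmin_pos eta (Rmin e1 e2)); assert (0 < Rmin e1 e2) by (apply Rmin_pos; lra); lra]).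
  assert (h < eta) by (pose proof (Rmin_l eta (Rmin e1 e2)); lra).
  assert (h < e1) by (pose proof (Rmin_r eta (Rmin e1 e2)); pose proof (Rmin_l e1 e2); lra).
  assert (h < e2) by (pose proof (Rmin_r eta (Rmin e1 e2)); pose proof (Rmin_r e1 e2); lra).
  specialize (A h ltac:(lra)). specialize (B h ltac:(lra)).
  rewrite Rplus_0_l in A, B. rewrite (Hfg h), (Hfg 0) in A by lra.
  pose proof (Rabs_triang ((g h - g 0) / h - l2) (- ((g h - g 0) / h - l1))) as HT.
  rewrite Rabs_Ropp in HT. replace ((g h - g 0) / h - l2 + - ((g h - g 0) / h - l1)) with (l1 - l2) in HT by ring.
  unfold e in *. lra.
Qed.

Lemma final_props (RR : R -> R -> Prop) delta Pi C lam :
  is_pm RR delta Pi -> Pi 0 = 0 -> 0 <= C ->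
  (forall r, 0 < r < delta -> 0 < Pi r /\ Rabs (ln (Pi r) - ln r - lam) <= C * r) ->
  (exists db E', 0 < db /\ 0 < E' /\ forall r, 0 < r < db -> exists p, 0 < p <= E' * r /\ RR p r) ->
  rderiv_at Pi 0 (exp lam) /\ (lam < 0 -> attr RR) /\ (lam > 0 -> rep RR) /\
  ((exists d' Pi' d, is_pm RR d' Pi' /\ rderiv_at Pi' 0 d /\ d <> 1) <-> lam <> 0).
Proof.
  intros [Hd [HRR HU]] H0 HC HL [db [E' [Hdb [HE' HB]]]].
  assert (RD : rderiv_at Pi 0 (exp lam)).
  { intros eps Heps.
    destruct (cont_eps_inv exp lam (derivable_continuous_pt _ _ (derivable_pt_exp lam)) eps Heps) as [de [Hde Hde']].
    exists (Rmin delta (de / (C + 1))). split. apply Rmin_pos; [lra| apply Rdiv_lt_0_compat; lra].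
    intros h Hh. assert (h < delta) by (pose proof (Rmin_l delta (de / (C + 1))); lra).
    assert (h < de / (C + 1)) by (pose proof (Rmin_r delta (de / (C + 1))); lra).
    rewrite Rplus_0_l, H0, Rminus_0_r. destruct (HL h ltac:(lra)) as [Hp Hb].
    rewrite <- exp_ln_diff by lra. apply Hde'.
    apply Rle_lt_trans with (C * h); auto.
    apply Rle_lt_trans with ((C + 1) * h). nra.
    apply (Rmult_lt_compat_l (C + 1)) in H1; [|lra]. replace ((C + 1) * (de / (C + 1))) with de in H1 by (field; lra). lra. }
  split; [exact RD|]. split; [|split].
  - intros Hlam. set (q := exp (lam / 2)).
    assert (Hq : 0 < q < 1) by (unfold q; split; [apply exp_pos| rewrite <- exp_0; apply exp_increasing; lra]).
    set (d' := Rmin delta (- lam / (2 * (C + 1)))).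
    assert (Hd' : 0 < d') by (unfold d'; apply Rmin_pos; [lra| apply Rdiv_lt_0_compat; lra]).
    assert (Step : forall r, 0 < r < d' -> 0 < Pi r <= q * r).
    { intros r Hr. assert (r < delta) by (pose proof (Rmin_l delta (- lam / (2 * (C + 1)))); unfold d' in Hr; lra).
      assert (r <= - lam / (2 * (C + 1))) by (pose proof (Rmin_r delta (- lam / (2 * (C + 1)))); unfold d' in Hr; lra).
      destruct (HL r ltac:(lra)) as [Hp Hb]. split; auto.
      assert (C * r <= - lam / 2).
      { apply (Rmult_le_compat_l (2 * (C + 1))) in H1; [|lra].
        replace (2 * (C + 1) * (- lam / (2 * (C + 1)))) with (- lam) in H1 by (field; lra). nra. }
      pose proof (Rle_abs (ln (Pi r) - ln r - lam)).
      assert (ln (Pi r) - ln r <= lam / 2) by lra.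
      assert (Pi r / r <= q). { rewrite <- exp_ln_diff by lra. unfold q. destruct (Req_dec (ln (Pi r) - ln r) (lam/2)) as [->|]; [lra|]. left; apply exp_increasing; lra. }
      apply (Rmult_le_compat_r r) in H5; [|lra]. replace (Pi r / r * r) with (Pi r) in H5 by (field; lra). lra. }
    exists d'. split; [lra|]. intros r0 Hr0.
    set (u := fun n => Nat.iter n Pi r0).
    assert (Inv : forall n, 0 < u n <= q ^ n * r0).
    { induction n as [|n IH]. simpl. unfold u; simpl. lra.
      change (u (S n)) with (Pi (u n)). assert (q ^ n <= 1) by (apply pow_le1; lra).
      assert (u n < d') by nra. destruct (Step (u n) ltac:(lra)). simpl. nra. }
    exists u. split; [reflexivity|]. split.
    + intros n. change (u (S n)) with (Pi (u n)). apply HRR. destruct (Inv n).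
      assert (q ^ n <= 1) by (apply pow_le1; lra). assert (d' <= delta) by apply Rmin_l. nra.
    + intros eps Heps. destruct (pow_lt_1_zero q ltac:(rewrite Rabs_right; lra) (eps / r0) ltac:(apply Rdiv_lt_0_compat; lra)) as [N HN].
      exists N. intros n Hn. specialize (HN n Hn). unfold R_dist. rewrite Rminus_0_r. destruct (Inv n).
      rewrite Rabs_right by lra. rewrite Rabs_right in HN by (apply Rle_ge, pow_le; lra).
      apply (Rmult_lt_compat_r r0) in HN; [|lra]. replace (eps / r0 * r0) with eps in HN by (field; lra). lra.
  - intros Hlam. set (q := exp (- lam / 2)).
    assert (Hq : 0 < q < 1) by (unfold q; split; [apply exp_pos| rewrite <- exp_0; apply exp_increasing; lra]).
    set (d' := Rmin db (Rmin (delta / (E' + 1)) (lam / (2 * (C + 1) * (E' + 1))))).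
    assert (Hd' : 0 < d') by (unfold d'; repeat apply Rmin_pos; try lra; apply Rdiv_lt_0_compat; nra).
    assert (Hd'1 : d' <= db) by apply Rmin_l.
    assert (Hd'2 : d' <= delta / (E' + 1)) by (eapply Rle_trans; [apply Rmin_r| apply Rmin_l]).
    assert (Hd'3 : d' <= lam / (2 * (C + 1) * (E' + 1))) by (eapply Rle_trans; [apply Rmin_r| apply Rmin_r]).
    assert (Step : forall r, exists p, 0 < r < d' -> 0 < p <= q * r /\ RR p r).
    { intros r. destruct (classic (0 < r < d')) as [Hr|Hr]; [|exists 0; tauto].
      destruct (HB r ltac:(lra)) as [p [Hp HRp]]. exists p. intros _.
      assert (HpE : p < delta).
      { apply Rle_lt_trans with (E' * r). lra. apply Rlt_le_trans with ((E' + 1) * d'). nra.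
        apply (Rmult_le_compat_l (E' + 1)) in Hd'2; [|lra]. replace ((E' + 1) * (delta / (E' + 1))) with delta in Hd'2 by (field; lra). lra. }
      assert (Er : r = Pi p) by (apply HU; auto; lra).
      destruct (HL p ltac:(lra)) as [_ Hb].
      assert (C * p <= lam / 2).
      { assert (p <= (E' + 1) * d') by nra.
        apply (Rmult_le_compat_l (E' + 1)) in Hd'3; [|lra].
        replace ((E' + 1) * (lam / (2 * (C + 1) * (E' + 1)))) with (lam / (2 * (C + 1))) in Hd'3 by (field; lra).
        assert (p <= lam / (2 * (C + 1))) by lra.
        apply (Rmult_le_compat_l (2 * (C + 1))) in H1; [|lra].
        replace (2 * (C + 1) * (lam / (2 * (C + 1)))) with lam in H1 by (field; lra). nra. }
      rewrite <- Er in Hb. pose proof (Rle_abs (- (ln r - ln p - lam))). rewrite Rabs_Ropp in H1.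
      assert (ln p - ln r <= - lam / 2) by lra.
      assert (p / r <= q). { rewrite <- exp_ln_diff by lra. unfold q. destruct (Req_dec (ln p - ln r) (- lam/2)) as [->|]; [lra|]. left; apply exp_increasing; lra. }
      apply (Rmult_le_compat_r r) in H3; [|lra]. replace (p / r * r) with p in H3 by (field; lra). split; [lra| auto]. }
    set (Bk := fun r => proj1_sig (constructive_indefinite_description _ (Step r))).
    assert (HBk : forall r, 0 < r < d' -> 0 < Bk r <= q * r /\ RR (Bk r) r).
    { intros r Hr. unfold Bk. destruct (constructive_indefinite_description _ (Step r)) as [p Hp]. simpl. auto. }
    exists d'. split; [lra|]. intros r0 Hr0.
    set (u := fun n => Nat.iter n Bk r0).
    assert (Inv : forall n, 0 < u n <= q ^ n * r0).
    { induction n as [|n IH]. simpl. unfold u; simpl. lra.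
      change (u (S n)) with (Bk (u n)). assert (q ^ n <= 1) by (apply pow_le1; lra).
      assert (u n < d') by nra. destruct (HBk (u n) ltac:(lra)) as [A _]. simpl. nra. }
    exists u. split; [reflexivity|]. split.
    + intros n. change (u (S n)) with (Bk (u n)). destruct (Inv n).
      assert (q ^ n <= 1) by (apply pow_le1; lra). apply HBk. nra.
    + intros eps Heps. destruct (pow_lt_1_zero q ltac:(rewrite Rabs_right; lra) (eps / r0) ltac:(apply Rdiv_lt_0_compat; lra)) as [N HN].
      exists N. intros n Hn. specialize (HN n Hn). unfold R_dist. rewrite Rminus_0_r. destruct (Inv n).
      rewrite Rabs_right by lra. rewrite Rabs_right in HN by (apply Rle_ge, pow_le; lra).
      apply (Rmult_lt_compat_r r0) in HN; [|lra]. replace (eps / r0 * r0) with eps in HN by (field; lra). lra.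
  - split.
    + intros [d' [Pi' [d [[Hd0 [HR' HU']] [HD Hne]]]]] Hl.
      assert (d = exp lam).
      { apply (rderiv_unique Pi' Pi d (exp lam) (Rmin delta d')); auto. apply Rmin_pos; lra.
        intros h Hh. assert (h < delta) by (pose proof (Rmin_l delta d'); lra). assert (h < d') by (pose proof (Rmin_r delta d'); lra).
        symmetry. apply HU'. lra. apply HRR. lra. }
      rewrite Hl, exp_0 in H. auto.
    + intros Hl. exists delta, Pi, (exp lam). split; [split; auto|]. split; auto.
      intros He. apply Hl. apply exp_inv. rewrite exp_0. auto.
Qed.


Lemma sum_opp' f n : sum_f_R0 (fun i => - f i) n = - sum_f_R0 f n.
Proof. induction n; simpl; [ring| rewrite IHn; ring]. Qed.

Definition negZ (Z : pvf) := mkPvf (fun i j => - cP Z i j) (fun i j => - cQ Z i j).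

Lemma hom_neg c k x y : hom (fun i j => - c i j) k x y = - hom c k x y.
Proof. unfold hom. rewrite <- sum_opp'. apply sum_eq. intros; ring. Qed.

Lemma A_neg Z j th : Afun (negZ Z) j th = - Afun Z j th.
Proof. unfold Afun, negZ; simpl. rewrite !hom_neg. ring. Qed.

Lemma R_neg Z j th : Rfun (negZ Z) j th = - Rfun Z j th.
Proof. unfold Rfun, negZ; simpl. rewrite !hom_neg. ring. Qed.

Lemma PX_neg m Z th rho : PX m (negZ Z) th rho = (- fst (PX m Z th rho), - snd (PX m Z th rho)).
Proof.
  rewrite !PX_dec. simpl. unfold P1f, P2f.
  rewrite (sum_eq (fun j => rho ^ (m - j) * Afun (negZ Z) j th) (fun j => - (rho ^ (m - j) * Afun Z j th))).
  rewrite (sum_eq (fun j => rho ^ (m - j) * Rfun (negZ Z) j th) (fun j => - (rho ^ (m - j) * Rfun Z j th))).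
  rewrite !sum_opp'. f_equal; ring.
  intros; rewrite R_neg; ring. intros; rewrite A_neg; ring.
Qed.

Lemma arc_rev m Z a b r0 r1 : arc (PX m (negZ Z)) b a r1 r0 -> arc (PX m Z) a b r0 r1.
Proof.
  intros [T [th [rh [HT [S [E1 [E2 [E3 [E4 Hint]]]]]]]]].
  exists T, (fun t => th (T - t)), (fun t => rh (T - t)).
  split; auto. split; [|split; [|split; [|split; [|split]]]].
  - intros t Ht. destruct (S (T - t) ltac:(lra)) as [A B]. rewrite PX_neg in A, B. simpl in A, B.
    assert (Hm : derivable_pt_lim (fun t => T - t) t (-1)).
    { replace (-1) with (0 - 1) by ring. apply derivable_pt_lim_minus. apply derivable_pt_lim_const. apply derivable_pt_lim_id. }
    split.
    + assert (H := derivable_pt_lim_comp (fun t => T - t) th t _ _ Hm A).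
      eapply derivable_pt_lim_ext; [|replace (fst (PX m Z (th (T - t)) (rh (T - t)))) with (- fst (PX m Z (th (T - t)) (rh (T - t))) * -1) by ring; exact H].
      intros; reflexivity.
    + assert (H := derivable_pt_lim_comp (fun t => T - t) rh t _ _ Hm B).
      eapply derivable_pt_lim_ext; [|replace (snd (PX m Z (th (T - t)) (rh (T - t)))) with (- snd (PX m Z (th (T - t)) (rh (T - t))) * -1) by ring; exact H].
      intros; reflexivity.
  - simpl. rewrite Rminus_0_r. auto.
  - simpl. rewrite Rminus_0_r. auto.
  - simpl. rewrite Rminus_diag. auto.
  - simpl. rewrite Rminus_diag. auto.
  - intros t Ht. rewrite Rmin_comm, Rmax_comm. apply Hint. lra.
Qed.

Definition RR2 m Z1 Z2 a0 a1 a2 := fun r0 r1 : R =>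
  exists rmid, arc (PX m Z1) a0 a1 r0 rmid /\ arc (PX m Z2) a1 a2 rmid r1.

Lemma range_shift s a1 th : (s = 1 \/ s = -1) ->
  (0 <= - s * (th - (a1 + s * PI)) <= PI <-> 0 <= s * (th - a1) <= PI).
Proof. intros Hs. destruct (s_cases s Hs) as [Hss _].
  replace (- s * (th - (a1 + s * PI))) with (s * s * PI - s * (th - a1)) by ring. rewrite Hss. split; intros; lra. Qed.

Lemma two_legs m Z1 Z2 a0 a1 a2 s c1 c2 Phi1 g1 Phi2 g2 :
  (s = 1 \/ s = -1) -> a1 = a0 + s * PI -> a2 = a1 + s * PI -> 0 < c1 -> 0 < c2 ->
  (forall th, 0 <= s * (th - a0) <= PI -> 2 * c1 <= s * Afun Z1 m th) ->
  (forall th, 0 <= s * (th - a1) <= PI -> 2 * c2 <= s * Afun Z2 m th) ->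
  (forall x, derivable_pt_lim Phi1 x (g1 x)) ->
  (forall th, 0 <= s * (th - a0) <= PI -> g1 th = Rfun Z1 m th / Afun Z1 m th) ->
  (forall x, derivable_pt_lim Phi2 x (g2 x)) ->
  (forall th, 0 <= s * (th - a1) <= PI -> g2 th = Rfun Z2 m th / Afun Z2 m th) ->
  exists delta Pi C, is_pm (RR2 m Z1 Z2 a0 a1 a2) delta Pi /\ Pi 0 = 0 /\ 0 <= C /\
    (forall r, 0 < r < delta -> 0 < Pi r /\
       Rabs (ln (Pi r) - ln r - (- ((Phi1 a1 - Phi1 a0) + (Phi2 a2 - Phi2 a1)))) <= C * r) /\
    (exists db E', 0 < db /\ 0 < E' /\ forall r, 0 < r < db -> exists p, 0 < p <= E' * r /\ RR2 m Z1 Z2 a0 a1 a2 p r).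
Proof.
  intros Hs E1 E2 Hc1 Hc2 HA1 HA2 HP1 Hg1 HP2 Hg2.
  destruct (s_cases s Hs) as [Hss Has].
  destruct (leg m Z1 a0 s c1 Phi1 g1 Hs Hc1 HA1 HP1 Hg1) as [d1 [F1 [C1 [Hd1 [HF1 [HC1 L1]]]]]].
  destruct (leg m Z2 a1 s c2 Phi2 g2 Hs Hc2 HA2 HP2 Hg2) as [d2 [F2 [C2 [Hd2 [HF2 [HC2 L2]]]]]].
  rewrite <- E1 in L1. rewrite <- E2 in L2.
  set (delta := Rmin d1 (d2 / (F1 + 1))).
  assert (Hdel : 0 < delta) by (unfold delta; apply Rmin_pos; [lra| apply Rdiv_lt_0_compat; lra]).
  assert (Hdel1 : delta <= d1) by apply Rmin_l.
  assert (Hdel2 : delta <= d2 / (F1 + 1)) by apply Rmin_r.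
  assert (Mid : forall r0, 0 <= r0 < delta -> forall rm, 0 <= rm <= F1 * r0 -> rm < d2).
  { intros r0 Hr0 rm Hrm. apply (Rmult_le_compat_l (F1 + 1)) in Hdel2; [|lra].
    replace ((F1 + 1) * (d2 / (F1 + 1))) with d2 in Hdel2 by (field; lra). nra. }
  set (Dl := - ((Phi1 a1 - Phi1 a0) + (Phi2 a2 - Phi2 a1))).
  set (P := fun r0 r1 => 0 <= r0 < delta -> RR2 m Z1 Z2 a0 a1 a2 r0 r1 /\ 0 <= r1 /\ (r0 = 0 -> r1 = 0) /\
            (0 < r0 -> 0 < r1 /\ Rabs (ln r1 - ln r0 - Dl) <= (C1 + C2 * F1) * r0)).
  assert (Ex : forall r0, exists r1, P r0 r1).
  { intros r0. destruct (classic (0 <= r0 < delta)) as [Hr|Hr]; [|exists 0; intros H; tauto].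
    destruct (L1 r0 ltac:(lra)) as [rm [A1 [U1 [B1 P1]]]].
    destruct (L2 rm ltac:(split; [lra| apply (Mid r0 Hr); lra])) as [r1 [A2 [U2 [B2 P2]]]].
    exists r1. intros _. split; [exists rm; auto|]. split; [lra|]. split.
    - intros ->. assert (rm = 0) by nra. subst rm. nra.
    - intros Hpos. destruct (P1 Hpos) as [Hrm Hl1]. destruct (P2 Hrm) as [Hr1 Hl2]. split; auto.
      unfold Dl. replace (ln r1 - ln r0 - - (Phi1 a1 - Phi1 a0 + (Phi2 a2 - Phi2 a1))) with
        ((ln rm - ln r0 + (Phi1 a1 - Phi1 a0)) + (ln r1 - ln rm + (Phi2 a2 - Phi2 a1))) by ring.
      eapply Rle_trans. apply Rabs_triang. assert (C2 * rm <= C2 * (F1 * r0)) by (apply Rmult_le_compat_l; lra). nra. }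
  set (Pi := fun r0 => proj1_sig (constructive_indefinite_description _ (Ex r0))).
  assert (HPi : forall r0, P r0 (Pi r0)) by (intros; unfold Pi; destruct (constructive_indefinite_description _ (Ex r0)); auto).
  exists delta, Pi, (C1 + C2 * F1). split; [split; [lra| split]|].
  - intros r0 Hr0. apply HPi; auto.
  - intros r0 r1 Hr0 [rm [A1 A2]]. destruct (HPi r0 Hr0) as [[rm' [A1' A2']] _].
    destruct (L1 r0 ltac:(lra)) as [rm0 [_ [U1 [B1 _]]]].
    assert (rm = rm0) by (apply U1; auto). assert (rm' = rm0) by (apply U1; auto). subst rm rm'.
    destruct (L2 rm0 ltac:(split; [lra| apply (Mid r0 Hr0); lra])) as [r10 [_ [U2 _]]].
    rewrite (U2 r1 A2), (U2 (Pi r0) A2'). reflexivity.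
  - split. destruct (HPi 0 ltac:(lra)) as [_ [_ [Z _]]]. auto.
    split. assert (0 <= C2 * F1) by (apply Rmult_le_pos; lra). lra. split.
    intros r Hr. destruct (HPi r ltac:(lra)) as [_ [_ [_ Z]]]. apply Z; lra.
    assert (HAn1 : forall th, 0 <= - s * (th - a1) <= PI -> 2 * c1 <= - s * Afun (negZ Z1) m th).
    { intros th Hth. rewrite A_neg. replace (- s * - Afun Z1 m th) with (s * Afun Z1 m th) by ring.
      apply HA1. apply (proj1 (range_shift s a0 th Hs)). rewrite <- E1. exact Hth. }
    assert (HAn2 : forall th, 0 <= - s * (th - a2) <= PI -> 2 * c2 <= - s * Afun (negZ Z2) m th).
    { intros th Hth. rewrite A_neg. replace (- s * - Afun Z2 m th) with (s * Afun Z2 m th) by ring.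
      apply HA2. apply (proj1 (range_shift s a1 th Hs)). rewrite <- E2. exact Hth. }
    assert (Hgn1 : forall th, 0 <= - s * (th - a1) <= PI -> g1 th = Rfun (negZ Z1) m th / Afun (negZ Z1) m th).
    { intros th Hth. rewrite A_neg, R_neg. rewrite Hg1. unfold Rdiv. destruct (Req_dec (Afun Z1 m th) 0) as [Hz|Hz].
      rewrite Hz, Ropp_0, Rinv_0. ring. rewrite Rinv_opp by auto. ring.
      apply (proj1 (range_shift s a0 th Hs)). rewrite <- E1. exact Hth. }
    assert (Hgn2 : forall th, 0 <= - s * (th - a2) <= PI -> g2 th = Rfun (negZ Z2) m th / Afun (negZ Z2) m th).
    { intros th Hth. rewrite A_neg, R_neg. rewrite Hg2. unfold Rdiv. destruct (Req_dec (Afun Z2 m th) 0) as [Hz|Hz].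
      rewrite Hz, Ropp_0, Rinv_0. ring. rewrite Rinv_opp by auto. ring.
      apply (proj1 (range_shift s a1 th Hs)). rewrite <- E2. exact Hth. }
    assert (Hs' : - s = 1 \/ - s = -1) by (destruct Hs; [right|left]; lra).
    destruct (leg m (negZ Z2) a2 (- s) c2 Phi2 g2 Hs' Hc2 HAn2 HP2 Hgn2) as [e2 [G2 [Cb2 [He2 [HG2 [_ M2]]]]]].
    destruct (leg m (negZ Z1) a1 (- s) c1 Phi1 g1 Hs' Hc1 HAn1 HP1 Hgn1) as [e1 [G1 [Cb1 [He1 [HG1 [_ M1]]]]]].
    assert (Ea1 : a2 + - s * PI = a1) by (rewrite E2; ring).
    assert (Ea0 : a1 + - s * PI = a0) by (rewrite E1; ring).
    rewrite Ea1 in M2. rewrite Ea0 in M1.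
    set (db := Rmin e2 (e1 / (G2 + 1))).
    exists db, (G1 * G2). split. unfold db; apply Rmin_pos; [lra| apply Rdiv_lt_0_compat; lra]. split. nra.
    intros r Hr. assert (r < e2) by (pose proof (Rmin_l e2 (e1 / (G2 + 1))); unfold db in Hr; lra).
    assert (r < e1 / (G2 + 1)) by (pose proof (Rmin_r e2 (e1 / (G2 + 1))); unfold db in Hr; lra).
    destruct (M2 r ltac:(lra)) as [rm [A2 [_ [B2 P2]]]]. destruct (P2 ltac:(lra)) as [Hrm _].
    assert (rm < e1).
    { apply (Rmult_lt_compat_l (G2 + 1)) in H0; [|lra]. replace ((G2 + 1) * (e1 / (G2 + 1))) with e1 in H0 by (field; lra). nra. }
    destruct (M1 rm ltac:(lra)) as [p [A1 [_ [B1 P1]]]]. destruct (P1 Hrm) as [Hp _].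
    exists p. split. split; auto. assert (G1 * rm <= G1 * (G2 * r)) by (apply Rmult_le_compat_l; lra). nra.
    exists rm. split; apply arc_rev; auto.
Qed.


Lemma hom_negxy c k x y : hom c k (- x) (- y) = (-1) ^ k * hom c k x y.
Proof.
  unfold hom. rewrite scal_sum. apply sum_eq. intros i Hi.
  replace (- x) with (-1 * x) by ring. replace (- y) with (-1 * y) by ring.
  rewrite !Rpow_mult_distr.
  replace ((-1) ^ k) with ((-1) ^ i * (-1) ^ (k - i)) by (rewrite <- pow_add; f_equal; lia). ring.
Qed.

Lemma odd_pow m : Nat.Odd m -> (-1) ^ m = -1.
Proof.
  intros [k ->]. rewrite pow_add, pow_mult. replace ((-1) ^ 2) with 1 by ring. rewrite pow1. ring.
Qed.

Lemma A_shift m Z th : Nat.Odd m -> Afun Z m (th + PI) = Afun Z m th.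
Proof.
  intros Ho. unfold Afun. rewrite neg_cos, neg_sin, !hom_negxy, odd_pow by auto. ring.
Qed.

Lemma R_shift m Z th : Nat.Odd m -> Rfun Z m (th + PI) = Rfun Z m th.
Proof.
  intros Ho. unfold Rfun. rewrite neg_cos, neg_sin, !hom_negxy, odd_pow by auto. ring.
Qed.

Lemma A_shiftm m Z th : Nat.Odd m -> Afun Z m (th - PI) = Afun Z m th.
Proof. intros Ho. rewrite <- (A_shift m Z (th - PI) Ho). f_equal; ring. Qed.
Lemma R_shiftm m Z th : Nat.Odd m -> Rfun Z m (th - PI) = Rfun Z m th.
Proof. intros Ho. rewrite <- (R_shift m Z (th - PI) Ho). f_equal; ring. Qed.
Lemma A_shift2 m Z th : Nat.Odd m -> Afun Z m (th + 2 * PI) = Afun Z m th.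
Proof. intros Ho. replace (th + 2 * PI) with ((th + PI) + PI) by ring. rewrite !A_shift; auto. Qed.
Lemma R_shift2 m Z th : Nat.Odd m -> Rfun Z m (th + 2 * PI) = Rfun Z m th.
Proof. intros Ho. replace (th + 2 * PI) with ((th + PI) + PI) by ring. rewrite !R_shift; auto. Qed.

Lemma Lf0 m Z th : Lf (PX m Z) th 0 = Afun Z m th * cos th.
Proof.
  unfold Lf. rewrite PX_0. simpl. replace (1 + 0 * (0 * 1)) with 1 by ring. rewrite sqrt_1. field.
Qed.

Lemma A_cont Z m x : continuity_pt (fun a => Afun Z m a) x.
Proof. apply (LB_cont1 (fun a _ => Afun Z m a) 0 x), LB_A. Qed.
Lemma R_cont Z m x : continuity_pt (fun a => Rfun Z m a) x.
Proof. apply (LB_cont1 (fun a _ => Rfun Z m a) 0 x), LB_R. Qed.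

Lemma sign_const (f : R -> R) a b : (forall x, continuity_pt f x) -> a <= b ->
  (forall x, a <= x <= b -> f x <> 0) -> forall x, a <= x <= b -> 0 < f a * f x.
Proof.
  intros Hc Hab Hn x Hx. apply Rnot_le_lt. intros Hle.
  destruct (IVT_cor f a x Hc ltac:(lra) ltac:(lra)) as [z [Hz Hz']].
  apply (Hn z); auto. lra.
Qed.

Lemma posmin (f : R -> R) lo hi : lo <= hi -> (forall x, continuity_pt f x) ->
  (forall x, lo <= x <= hi -> 0 < f x) -> exists c, 0 < c /\ forall x, lo <= x <= hi -> 2 * c <= f x.
Proof.
  intros Hlh Hc Hp. destruct (continuity_ab_min f lo hi Hlh (fun c _ => Hc c)) as [mx [Hmx Hin]].
  exists (f mx / 2). split. specialize (Hp mx Hin). lra. intros x Hx. specialize (Hmx x Hx). lra.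
Qed.

Lemma rmax_lip a b c : Rabs (Rmax a c - Rmax b c) <= Rabs (a - b).
Proof. unfold Rmax; repeat destruct Rle_dec; apply Rabs_le;
  pose proof (Rle_abs (a - b)); pose proof (Rle_abs (- (a - b))); rewrite Rabs_Ropp in *; lra. Qed.

Lemma rmax_cont f c x : continuity_pt f x -> continuity_pt (fun x => Rmax (f x) c) x.
Proof.
  intros H. apply cont_eps. intros eps He. destruct (cont_eps_inv f x H eps He) as [d [Hd Hd']].
  exists d. split; auto. intros y Hy. eapply Rle_lt_trans. apply rmax_lip. auto.
Qed.

Definition Gf m Z sg c th := Rfun Z m th * sg / Rmax (sg * Afun Z m th) c.

Lemma Gf_cont m Z sg c x : 0 < c -> continuity_pt (Gf m Z sg c) x.
Proof.
  intros Hc. unfold Gf, Rdiv.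
  apply (continuity_pt_mult (fun th => Rfun Z m th * sg) (fun th => / Rmax (sg * Afun Z m th) c)).
  apply (continuity_pt_mult (fun th => Rfun Z m th) (fun _ => sg)). apply R_cont. apply continuity_pt_const; intros ? ?; reflexivity.
  apply (continuity_pt_inv (fun th => Rmax (sg * Afun Z m th) c)).
  apply (rmax_cont (fun th => sg * Afun Z m th)). apply (continuity_pt_scal (fun th => Afun Z m th)). apply A_cont.
  pose proof (Rmax_r (sg * Afun Z m x) c). lra.
Qed.

Lemma Gf_eq m Z sg c th : (sg = 1 \/ sg = -1) -> 0 < c -> 2 * c <= sg * Afun Z m th ->
  Gf m Z sg c th = Rfun Z m th / Afun Z m th.
Proof.
  intros Hs Hc H. unfold Gf. rewrite Rmax_left by lra. destruct (s_cases sg Hs) as [Hss _].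
  assert (Afun Z m th <> 0) by (intro Hz; rewrite Hz in H; lra).
  assert (sg <> 0) by (intro Hz; rewrite Hz in Hss; lra). field. split; auto.
Qed.

Lemma setup m X Y sg : Nat.Odd m -> (sg = 1 \/ sg = -1) -> 0 < sg * Afun X m 0 -> 0 < sg * Afun Y m 0 ->
  (forall th, 0 <= sin th -> Afun X m th <> 0) -> (forall th, sin th <= 0 -> Afun Y m th <> 0) ->
  exists cX cY, 0 < cX /\ 0 < cY /\ (forall th, 0 <= th <= PI -> 2 * cX <= sg * Afun X m th) /\
     (forall th, 0 <= th <= PI -> 2 * cY <= sg * Afun Y m th).
Proof.
  intros Ho Hs HX HY N1 N2. destruct (s_cases sg Hs) as [Hss _]. pose proof PI_RGT_0.
  assert (PX : forall th, 0 <= th <= PI -> 0 < sg * Afun X m th).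
  { intros th Hth. assert (S := sign_const (fun a => Afun X m a) 0 PI (A_cont X m) ltac:(lra)
        ltac:(intros x Hx; apply N1; apply sin_ge_0; lra) th Hth). simpl in S.
    set (a0 := Afun X m 0) in *. set (a := Afun X m th) in *.
    assert (Q0 : 0 < a0 * a0) by nra.
    assert (Q1 : 0 < (sg * a0) * (a0 * a)) by nra.
    replace ((sg * a0) * (a0 * a)) with ((a0 * a0) * (sg * a)) in Q1 by ring. nra. }
  assert (PY : forall th, 0 <= th <= PI -> 0 < sg * Afun Y m th).
  { intros th Hth. rewrite <- (A_shiftm m Y th Ho).
    assert (NY : forall x, - PI <= x <= 0 -> Afun Y m x <> 0).
    { intros x Hx. apply N2. rewrite <- (Ropp_involutive x), sin_neg. pose proof (sin_ge_0 (- x) ltac:(lra) ltac:(lra)). lra. }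
    assert (S1 := sign_const (fun a => Afun Y m a) (- PI) 0 (A_cont Y m) ltac:(lra) NY (th - PI) ltac:(lra)).
    assert (S2 := sign_const (fun a => Afun Y m a) (- PI) 0 (A_cont Y m) ltac:(lra) NY 0 ltac:(lra)).
    simpl in S1, S2.
    set (b := Afun Y m (- PI)) in *. set (a0 := Afun Y m 0) in *. set (a := Afun Y m (th - PI)) in *.
    assert (Q1 : 0 < (b * a0) * (b * a)) by nra.
    replace ((b * a0) * (b * a)) with ((b * b) * (a0 * a)) in Q1 by ring.
    assert (Q2 : 0 < b * b) by nra. assert (Q3 : 0 < a0 * a) by nra.
    assert (Q4 : 0 < (sg * a0) * (a0 * a)) by nra.
    replace ((sg * a0) * (a0 * a)) with ((a0 * a0) * (sg * a)) in Q4 by ring. nra. }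
  destruct (posmin (fun th => sg * Afun X m th) 0 PI ltac:(lra)) as [cX [HcX HX']].
  { intros; apply (continuity_pt_scal (fun a => Afun X m a)), A_cont. }
  { exact PX. }
  destruct (posmin (fun th => sg * Afun Y m th) 0 PI ltac:(lra)) as [cY [HcY HY']].
  { intros; apply (continuity_pt_scal (fun a => Afun Y m a)), A_cont. }
  { exact PY. }
  exists cX, cY. auto.
Qed.

Lemma Phi_deriv m Z sg c x : 0 < c -> derivable_pt_lim (fun x => RInt (Gf m Z sg c) 0 x) x (Gf m Z sg c x).
Proof. intros Hc. apply RInt_deriv. intros; apply Gf_cont; auto. Qed.

Lemma shift_deriv (Phi g : R -> R) a x : (forall x, derivable_pt_lim Phi x (g x)) ->
  derivable_pt_lim (fun x => Phi (x + a)) x (g (x + a)).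
Proof.
  intros H. assert (H2 := derivable_pt_lim_comp (fun x => x + a) Phi x 1 _
    ltac:(replace 1 with (1 + 0) by ring; apply derivable_pt_lim_plus; [apply derivable_pt_lim_id| apply derivable_pt_lim_const]) (H (x + a))).
  eapply derivable_pt_lim_ext; [|replace (g (x + a)) with (g (x + a) * 1) by ring; exact H2]. intros; reflexivity.
Qed.


Theorem mainTheorem6 (m : nat) (X Y : pvf)
  (Hodd : Nat.Odd m) (HZ : in_Omega m X Y) (Hns : no_singular_on_S1 m X Y)
  (pr : Riemann_integrable
          (fun th => Rfun X m th / Afun X m th + Rfun Y m th / Afun Y m th) 0 PI) :
  let mu := RiemannInt pr in
  closed_polytraj_type1 m X Y /\
  (exists delta Pi, is_poincare_map m X Y delta Pi /\
                    rderiv_at Pi 0 (exp (orient_sign m X * mu))) /\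
  (orient_sign m X * mu < 0 -> attractor m X Y) /\
  (orient_sign m X * mu > 0 -> repeller m X Y) /\
  (elementary m X Y <-> mu <> 0).
Proof.
  intros mu. pose proof PI_RGT_0 as HPI.
  assert (N1 : forall th, 0 <= sin th -> Afun X m th <> 0).
  { intros th Hs HA. apply (Hns th). unfold singular_point; cbv zeta. left. split. lra. rewrite PX_0, HA. reflexivity. }
  assert (N2 : forall th, sin th <= 0 -> Afun Y m th <> 0).
  { intros th Hs HA. apply (Hns th). unfold singular_point; cbv zeta. right; left. split. lra. rewrite PX_0, HA. reflexivity. }
  assert (N3 : 0 < Afun X m 0 * Afun Y m 0).
  { destruct (Rlt_or_le 0 (Afun X m 0 * Afun Y m 0)) as [|Hle]; auto. exfalso.
    assert (HX0 := N1 0 ltac:(rewrite sin_0; lra)). assert (HY0 := N2 0 ltac:(rewrite sin_0; lra)).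
    assert (Hlt : Afun X m 0 * Afun Y m 0 < 0).
    { destruct Hle as [|Heq]; auto. apply Rmult_integral in Heq. destruct Heq; contradiction. }
    apply (Hns 0). unfold singular_point; cbv zeta. right; right. split. apply sin_0. right; right.
    rewrite !Lf0, cos_0, !Rmult_1_r. split. auto.
    unfold sliding. rewrite !Lf0, cos_0, !PX_0. simpl. f_equal; unfold Rdiv; ring. }
  assert (Sew0 : sewing m X Y 0) by (unfold sewing; rewrite !Lf0, cos_0, !Rmult_1_r; lra).
  assert (SewPI : sewing m X Y PI).
  { unfold sewing. rewrite !Lf0, cos_PI.
    pose proof (A_shift m X 0 Hodd) as AX. pose proof (A_shift m Y 0 Hodd) as AY.
    rewrite Rplus_0_l in AX, AY. rewrite AX, AY. nra. }
  assert (MU : forall sg cX cY, (sg = 1 \/ sg = -1) -> 0 < cX -> 0 < cY ->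
      (forall th, 0 <= th <= PI -> 2 * cX <= sg * Afun X m th) ->
      (forall th, 0 <= th <= PI -> 2 * cY <= sg * Afun Y m th) ->
      mu = RInt (Gf m X sg cX) 0 PI + RInt (Gf m Y sg cY) 0 PI).
  { intros sg cX cY Hs HcX HcY HX HY. unfold mu. rewrite <- RInt_Reals.
    rewrite (RInt_ext _ (fun x => Gf m X sg cX x + Gf m Y sg cY x)).
    apply (RInt_plus (V:=R_CompleteNormedModule)); apply RInt_ex; intros; apply Gf_cont; auto.
    intros x Hx. rewrite Rmin_left, Rmax_right in Hx by lra.
    rewrite !Gf_eq; auto; [apply HY| apply HX]; lra. }
  assert (Phi0 : forall Z sg c, RInt (Gf m Z sg c) 0 0 = 0) by (intros; rewrite RInt_point; reflexivity).
  destruct (Rlt_dec 0 (Afun X m 0)) as [Hccw|Hcw].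
  -
    assert (OS : orient_sign m X = -1) by (unfold orient_sign; destruct Rlt_dec; [reflexivity| contradiction]).
    assert (HY0 : 0 < 1 * Afun Y m 0) by nra.
    destruct (setup m X Y 1 Hodd (or_introl eq_refl) ltac:(lra) HY0 N1 N2) as [cX [cY [HcX [HcY [HX HY]]]]].
    set (PhX := fun x => RInt (Gf m X 1 cX) 0 x). set (PhY := fun x => RInt (Gf m Y 1 cY) 0 x).
    assert (ERR : return_rel m X Y = RR2 m X Y 0 PI (2 * PI)).
    { apply functional_extensionality; intro r0; apply functional_extensionality; intro r1.
      unfold return_rel. destruct Rlt_dec; [reflexivity| contradiction]. }
    destruct (two_legs m X Y 0 PI (2 * PI) 1 cX cY PhX (Gf m X 1 cX) (fun x => PhY (x + - PI)) (fun x => Gf m Y 1 cY (x + - PI))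
       (or_introl eq_refl) ltac:(ring) ltac:(ring) HcX HcY) as [delta [Pi [C [HPM [HP0 [HC [HL HB]]]]]]].
    + intros th Hth. apply HX. lra.
    + intros th Hth. rewrite <- (A_shiftm m Y th Hodd). apply HY. lra.
    + intros x. apply Phi_deriv; auto.
    + intros th Hth. apply Gf_eq; auto. apply HX; lra.
    + intros x. apply (shift_deriv PhY (Gf m Y 1 cY)). intros; apply Phi_deriv; auto.
    + intros th Hth. replace (th + - PI) with (th - PI) by ring. rewrite Gf_eq, A_shiftm, R_shiftm; auto.
      rewrite A_shiftm by auto. replace (1 * Afun Y m th) with (1 * Afun Y m (th - PI)) by (rewrite A_shiftm; auto).
      apply HY. lra.
    + rewrite <- ERR in HPM, HB.
      assert (Lam : - (PhX PI - PhX 0 + (PhY (2 * PI + - PI) - PhY (PI + - PI))) = orient_sign m X * mu).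
      { rewrite OS, (MU 1 cX cY); auto. unfold PhX, PhY. replace (2 * PI + - PI) with PI by ring.
        replace (PI + - PI) with 0 by ring. rewrite !Phi0. ring. }
      rewrite Lam in HL.
      destruct (final_props (return_rel m X Y) delta Pi C (orient_sign m X * mu) HPM HP0 HC HL HB) as [RD [AT [RP EL]]].
      split; [split; [|split; auto]|split; [exists delta, Pi; split; auto|split; [exact AT|split; [exact RP|]]]].
      * destruct HPM as [Hd [HR _]]. pose proof (HR 0 ltac:(lra)) as H0. rewrite HP0 in H0. exact H0.
      * rewrite OS in EL. unfold elementary. rewrite EL. split; intros H Hc; apply H; lra.
  -
    assert (OS : orient_sign m X = 1) by (unfold orient_sign; destruct Rlt_dec; [contradiction| reflexivity]).
    assert (HXn : Afun X m 0 < 0) by (pose proof (N1 0 ltac:(rewrite sin_0; lra)); lra).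
    assert (HX0 : 0 < -1 * Afun X m 0) by lra.
    assert (HY0 : 0 < -1 * Afun Y m 0) by nra.
    destruct (setup m X Y (-1) Hodd (or_intror eq_refl) HX0 HY0 N1 N2) as [cX [cY [HcX [HcY [HX HY]]]]].
    set (PhX := fun x => RInt (Gf m X (-1) cX) 0 x). set (PhY := fun x => RInt (Gf m Y (-1) cY) 0 x).
    assert (ERR : return_rel m X Y = RR2 m Y X 0 (- PI) (- 2 * PI)).
    { apply functional_extensionality; intro r0; apply functional_extensionality; intro r1.
      unfold return_rel. destruct Rlt_dec; [contradiction| reflexivity]. }
    destruct (two_legs m Y X 0 (- PI) (- 2 * PI) (-1) cY cX (fun x => PhY (x + PI)) (fun x => Gf m Y (-1) cY (x + PI))
       (fun x => PhX (x + 2 * PI)) (fun x => Gf m X (-1) cX (x + 2 * PI))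
       (or_intror eq_refl) ltac:(ring) ltac:(ring) HcY HcX) as [delta [Pi [C [HPM [HP0 [HC [HL HB]]]]]]].
    + intros th Hth. rewrite <- (A_shift m Y th Hodd). apply HY. lra.
    + intros th Hth. rewrite <- (A_shift2 m X th Hodd). apply HX. lra.
    + intros x. apply (shift_deriv PhY (Gf m Y (-1) cY)). intros; apply Phi_deriv; auto.
    + intros th Hth. rewrite Gf_eq; [rewrite A_shift, R_shift by auto; reflexivity| right; reflexivity| auto| apply HY; lra].
    + intros x. apply (shift_deriv PhX (Gf m X (-1) cX)). intros; apply Phi_deriv; auto.
    + intros th Hth. rewrite Gf_eq; [rewrite A_shift2, R_shift2 by auto; reflexivity| right; reflexivity| auto| apply HX; lra].
    + rewrite <- ERR in HPM, HB.
      assert (Lam : - (PhY (- PI + PI) - PhY (0 + PI) + (PhX (- 2 * PI + 2 * PI) - PhX (- PI + 2 * PI))) = orient_sign m X * mu).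
      { rewrite OS, (MU (-1) cX cY); auto. unfold PhX, PhY. replace (- PI + PI) with 0 by ring.
        replace (0 + PI) with PI by ring. replace (- 2 * PI + 2 * PI) with 0 by ring. replace (- PI + 2 * PI) with PI by ring.
        rewrite !Phi0. ring. }
      rewrite Lam in HL.
      destruct (final_props (return_rel m X Y) delta Pi C (orient_sign m X * mu) HPM HP0 HC HL HB) as [RD [AT [RP EL]]].
      split; [split; [|split; auto]|split; [exists delta, Pi; split; auto|split; [exact AT|split; [exact RP|]]]].
      * destruct HPM as [Hd [HR _]]. pose proof (HR 0 ltac:(lra)) as H0. rewrite HP0 in H0. exact H0.
      * rewrite OS in EL. unfold elementary. rewrite EL. split; intros H Hc; apply H; lra.
Qed.
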